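(* Under the standing assumptions (A) below, let $\Omega'=\{t\in[0,L]:\tau(t)\ne\pm\lambda\}\cup\Omega$. If $I$ is any connected component of $\Omega'$, then $\tau(I)$ is contained in a great circle of $S^{n-1}$ through $\lambda$.
   Context: Standing assumptions (A): $n\ge2$, $L>0$, $\beta\colon[0,L]\to(0,\infty)$ of bounded variation with $1/\beta$ bounded; $\tau\in W^{1,\infty}((0,L);S^{n-1})$ with $k=\operatorname{ess\,sup}|\tau'|>0$; $\lambda\in S^{n-1}$ and $u\in W^{1,\infty}((0,L);\mathbb{R}^n)\setminus\{0\}$ such that $u'+(u\cdot\tau')\tau=\beta(\lambda-(\lambda\cdot\tau)\tau)$ and $|u|\tau'=ku$ a.e. in $(0,L)$; $f=k|u|$, which then satisfies $f'=\beta\,\lambda\cdot\tau'$ and $f(\tau''+k^2\tau)=\beta k^2\,\mathrm{proj}^\perp_{\tau,\tau'}(\lambda)$ weakly in $(0,L)$ (where $\mathrm{proj}^\perp_{V,W}$ is the orthogonal projection onto the orthogonal complement of $\mathrm{span}\{V,W\}$); $\Omega=\{t\in[0,L]:f(t)>0\}$ (open relative to $[0,L]$); and $\tau(t),\tau'(t),\lambda$ are linearly dependent for every $t\in\Omega$ (note $\tau'$ is continuous on $\Omega$). *)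

(* Defs.v *)
From Stdlib Require Import Reals Lra Lia.
Open Scope R_scope.

(* Vectors of R^n are functions nat -> R; only indices i < n matter. *)
Definition vec := nat -> R.

Fixpoint rsum (N : nat) (f : nat -> R) : R :=
  match N with O => 0 | S m => rsum m f + f m end.

Definition dot (n : nat) (x y : vec) : R := rsum n (fun i => x i * y i).
Definition vnorm (n : nat) (x : vec) : R := sqrt (dot n x x).

Definition veq (n : nat) (x y : vec) : Prop := forall i, (i < n)%nat -> x i = y i.
Definition vzero (n : nat) (x : vec) : Prop := forall i, (i < n)%nat -> x i = 0.
Definition vopp (x : vec) : vec := fun i => - x i.

Definition negligible (A : R -> Prop) : Prop :=
  forall eps, 0 < eps ->
    exists a b : nat -> R,
      (forall k, a k <= b k) /\
      (forall x, A x -> exists k, a k < x < b k) /\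
      (forall N, rsum N (fun k => b k - a k) <= eps).

Definition ae_on (a b : R) (P : R -> Prop) : Prop :=
  negligible (fun t => a < t < b /\ ~ P t).

Definition lipschitz_on (n : nat) (a b : R) (g : R -> vec) : Prop :=
  exists K, forall i s t, (i < n)%nat -> a <= s <= b -> a <= t <= b ->
    Rabs (g s i - g t i) <= K * Rabs (s - t).

(* g is in W^{1,oo}((a,b);R^n) with (representative of its) derivative g':
   g is Lipschitz on [a,b] and classically differentiable with derivative g'
   at almost every point of (a,b). *)
Definition W1inf (n : nat) (a b : R) (g g' : R -> vec) : Prop :=
  lipschitz_on n a b g /\
  ae_on a b (fun t => forall i, (i < n)%nat ->
                        derivable_pt_lim (fun s => g s i) t (g' t i)).

Definition is_ess_sup (a b : R) (h : R -> R) (M : R) : Prop :=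
  ae_on a b (fun t => h t <= M) /\
  (forall M', M' < M -> ~ ae_on a b (fun t => h t <= M')).

Definition bounded_variation (a b : R) (h : R -> R) : Prop :=
  exists V, forall (N : nat) (p : nat -> R),
    p O = a -> p N = b -> (forall k, (k < N)%nat -> p k <= p (S k)) ->
    rsum N (fun k => Rabs (h (p (S k)) - h (p k))) <= V.

Definition lin_dep3 (n : nat) (x y z : vec) : Prop :=
  exists a b c : R, ~ (a = 0 /\ b = 0 /\ c = 0) /\
    vzero n (fun i => a * x i + b * y i + c * z i).

Definition vcont_within (n : nat) (a b : R) (g : R -> vec) (t : R) : Prop :=
  forall i, (i < n)%nat -> forall eps, 0 < eps -> exists delta, 0 < delta /\
    forall s, a <= s <= b -> Rabs (s - t) < delta -> Rabs (g s i - g t i) < eps.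

Definition is_interval (I : R -> Prop) : Prop :=
  forall x y z, I x -> I y -> x <= z <= y -> I z.

Definition conn_component (S I : R -> Prop) : Prop :=
  (exists x, I x) /\ (forall x, I x -> S x) /\ is_interval I /\
  (forall J, is_interval J -> (forall x, J x -> S x) ->
     (exists x, J x /\ I x) -> forall x, J x -> I x).

(* the image of I under g lies in a great circle of S^{n-1} through lam:
   there is a unit mu orthogonal to lam with g(t) in span{lam, mu}
   (g(t) being a unit vector, it lies on that great circle). *)
Definition in_great_circle_through (n : nat) (lam : vec) (g : R -> vec)
  (I : R -> Prop) : Prop :=
  exists mu : vec, dot n mu mu = 1 /\ dot n lam mu = 0 /\
    forall t, I t -> veq n (g t)
      (fun i => dot n (g t) lam * lam i + dot n (g t) mu * mu i).

(* Main.v *)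
Require Import Defs.
From Stdlib Require Import Reals Lra Lia Psatz Classical.
Open Scope R_scope.

Lemma abs_le x y : Rabs x <= y -> -y <= x <= y.
Proof. unfold Rabs; destruct Rcase_abs; lra. Qed.
Lemma abs_lt x y : Rabs x < y -> -y < x < y.
Proof. unfold Rabs; destruct Rcase_abs; lra. Qed.
Lemma abs_intro x y : -y <= x <= y -> Rabs x <= y.
Proof. unfold Rabs; destruct Rcase_abs; lra. Qed.
Lemma abs_intro_lt x y : -y < x < y -> Rabs x < y.
Proof. unfold Rabs; destruct Rcase_abs; lra. Qed.

Lemma rsum_ext N f g : (forall i, (i < N)%nat -> f i = g i) -> rsum N f = rsum N g.
Proof.
  induction N; simpl; intros H; auto.
  rewrite IHN by (intros; apply H; lia). rewrite (H N) by lia. auto.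
Qed.
Lemma rsum_plus N f g : rsum N (fun i => f i + g i) = rsum N f + rsum N g.
Proof. induction N; simpl; lra. Qed.
Lemma rsum_scal N c f : rsum N (fun i => c * f i) = c * rsum N f.
Proof. induction N; simpl; [lra|]. rewrite IHN. ring. Qed.
Lemma rsum_zero N : rsum N (fun _ => 0) = 0.
Proof. induction N; simpl; lra. Qed.
Lemma rsum_nonneg N f : (forall i, (i < N)%nat -> 0 <= f i) -> 0 <= rsum N f.
Proof. induction N; simpl; intros H; [lra|]. pose proof (H N ltac:(lia)).
  pose proof (IHN ltac:(intros; apply H; lia)). lra. Qed.
Lemma rsum_le N f g : (forall i, (i < N)%nat -> f i <= g i) -> rsum N f <= rsum N g.
Proof. induction N; simpl; intros H; [lra|]. pose proof (H N ltac:(lia)).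
  pose proof (IHN ltac:(intros; apply H; lia)). lra. Qed.
Lemma rsum_abs N f : Rabs (rsum N f) <= rsum N (fun i => Rabs (f i)).
Proof. induction N; simpl. rewrite Rabs_R0; lra.
  eapply Rle_trans. apply Rabs_triang. lra. Qed.
Lemma rsum_term N f j : (j < N)%nat -> (forall i, (i < N)%nat -> 0 <= f i) -> f j <= rsum N f.
Proof. induction N; intros Hj H; [lia|]. simpl.
  destruct (Nat.eq_dec j N). subst. pose proof (rsum_nonneg N f ltac:(intros; apply H; lia)). lra.
  pose proof (IHN ltac:(lia) ltac:(intros; apply H; lia)). pose proof (H N ltac:(lia)). lra. Qed.
Lemma rsum_mono N M f : (N <= M)%nat -> (forall i, (i < M)%nat -> 0 <= f i) -> rsum N f <= rsum M f.
Proof. induction M; intros HNM H. replace N with 0%nat by lia. simpl; lra.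
  destruct (Nat.eq_dec N (S M)). subst; lra.
  simpl. pose proof (IHM ltac:(lia) ltac:(intros; apply H; lia)). pose proof (H M ltac:(lia)). lra. Qed.

Lemma dot_ext n x y x' y' : (forall i, (i < n)%nat -> x i = x' i) -> (forall i, (i < n)%nat -> y i = y' i) ->
  dot n x y = dot n x' y'.
Proof. intros H1 H2; unfold dot; apply rsum_ext; intros; rewrite H1, H2; auto. Qed.
Lemma dot_sym n x y : dot n x y = dot n y x.
Proof. unfold dot; apply rsum_ext; intros; ring. Qed.
Lemma dot_lin_l n a b x y z : dot n (fun i => a * x i + b * y i) z = a * dot n x z + b * dot n y z.
Proof. unfold dot. rewrite <- (rsum_scal n a), <- (rsum_scal n b), <- rsum_plus. apply rsum_ext; intros; ring. Qed.
Lemma dot_lin_r n a b x y z : dot n z (fun i => a * x i + b * y i) = a * dot n z x + b * dot n z y.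
Proof. rewrite dot_sym, dot_lin_l, (dot_sym n x), (dot_sym n y); auto. Qed.
Lemma dot_zero_l n y : dot n (fun _ => 0) y = 0.
Proof. unfold dot. induction n; simpl; [auto|]. rewrite IHn; ring. Qed.
Lemma dot_nonneg n x : 0 <= dot n x x.
Proof. unfold dot; apply rsum_nonneg; intros; nra. Qed.
Lemma dot_comp n x i : (i < n)%nat -> x i * x i <= dot n x x.
Proof. intros; unfold dot. apply (rsum_term n (fun i => x i * x i)); auto; intros; nra. Qed.
Lemma dot_eq0 n x : dot n x x = 0 -> vzero n x.
Proof. intros H i Hi. pose proof (dot_comp n x i Hi). nra. Qed.
Definition N1 n (x : vec) := rsum n (fun i => Rabs (x i)).
Lemma N1_nonneg n x : 0 <= N1 n x.
Proof. unfold N1; apply rsum_nonneg; intros; apply Rabs_pos. Qed.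
Lemma dot_bound n x y e : (forall i, (i < n)%nat -> Rabs (y i) <= e) -> Rabs (dot n x y) <= e * N1 n x.
Proof. intros H. unfold dot, N1. eapply Rle_trans. apply rsum_abs.
  rewrite <- rsum_scal. apply rsum_le. intros i Hi. rewrite Rabs_mult.
  pose proof (H i Hi). pose proof (Rabs_pos (x i)). nra. Qed.
Lemma unit_comp n x i : dot n x x = 1 -> (i < n)%nat -> Rabs (x i) <= 1.
Proof. intros H Hi. pose proof (dot_comp n x i Hi). apply abs_intro. nra. Qed.

Lemma dplus f g x a b : derivable_pt_lim f x a -> derivable_pt_lim g x b ->
  derivable_pt_lim (fun s => f s + g s) x (a + b).
Proof. intros; apply (derivable_pt_lim_plus f g); auto. Qed.
Lemma dminus f g x a b : derivable_pt_lim f x a -> derivable_pt_lim g x b ->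
  derivable_pt_lim (fun s => f s - g s) x (a - b).
Proof. intros; apply (derivable_pt_lim_minus f g); auto. Qed.
Lemma dmult f g x a b : derivable_pt_lim f x a -> derivable_pt_lim g x b ->
  derivable_pt_lim (fun s => f s * g s) x (a * g x + f x * b).
Proof. intros; apply (derivable_pt_lim_mult f g); auto. Qed.
Lemma ddiv f g x a b : derivable_pt_lim f x a -> derivable_pt_lim g x b -> g x <> 0 ->
  derivable_pt_lim (fun s => f s / g s) x ((a * g x - b * f x) / (g x)²).
Proof. intros; apply (derivable_pt_lim_div f g); auto. Qed.
Lemma dconst c x : derivable_pt_lim (fun _ => c) x 0.
Proof. apply derivable_pt_lim_const. Qed.
Lemma did x : derivable_pt_lim (fun s => s) x 1.
Proof. apply derivable_pt_lim_id. Qed.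
Lemma dopp f x a : derivable_pt_lim f x a -> derivable_pt_lim (fun s => - f s) x (- a).
Proof. intros; apply (derivable_pt_lim_opp f); auto. Qed.
Lemma dval f x a b : a = b -> derivable_pt_lim f x a -> derivable_pt_lim f x b.
Proof. intros ->; auto. Qed.

Lemma drsum N (F : R -> nat -> R) (F' : nat -> R) t :
  (forall i, (i < N)%nat -> derivable_pt_lim (fun s => F s i) t (F' i)) ->
  derivable_pt_lim (fun s => rsum N (F s)) t (rsum N F').
Proof.
  induction N; intros H; simpl. apply dconst.
  apply dplus. apply IHN; intros; apply H; lia. apply H; lia.
Qed.

Lemma ddot n (x y : R -> vec) (x' y' : vec) t :
  (forall i, (i < n)%nat -> derivable_pt_lim (fun s => x s i) t (x' i)) ->
  (forall i, (i < n)%nat -> derivable_pt_lim (fun s => y s i) t (y' i)) ->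
  derivable_pt_lim (fun s => dot n (x s) (y s)) t (dot n x' (y t) + dot n (x t) y').
Proof.
  intros Hx Hy. unfold dot.
  apply dval with (rsum n (fun i => x' i * y t i + x t i * y' i)).
  apply rsum_plus.
  apply (drsum n (fun s i => x s i * y s i)). intros i Hi. apply dmult; auto.
Qed.

Lemma ddot_const n (z : vec) (y : R -> vec) (y' : vec) t :
  (forall i, (i < n)%nat -> derivable_pt_lim (fun s => y s i) t (y' i)) ->
  derivable_pt_lim (fun s => dot n z (y s)) t (dot n z y').
Proof.
  intros Hy. apply dval with (dot n (fun _ => 0) (y t) + dot n z y').
  rewrite dot_zero_l; ring.
  apply (ddot n (fun _ => z) y (fun _ => 0) y'); auto. intros; apply dconst.
Qed.

Lemma dlocal f x l eps : derivable_pt_lim f x l -> 0 < eps ->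
  exists d, 0 < d /\ forall y, Rabs (y - x) < d -> Rabs (f y - f x - l * (y - x)) <= eps * Rabs (y - x).
Proof.
  intros H He. destruct (H eps He) as [[d Hd] Hd2]. exists d; split; auto.
  intros y Hy. destruct (Req_dec y x). subst. replace (x - x) with 0 by ring. rewrite Rabs_R0.
  replace (f x - f x - l * 0) with 0 by ring. rewrite Rabs_R0; lra.
  assert (Hh : y - x <> 0) by lra.
  specialize (Hd2 (y - x) Hh Hy). simpl in Hd2. replace (x + (y - x)) with y in Hd2 by ring.
  replace (f y - f x - l * (y - x)) with (((f y - f x) / (y - x) - l) * (y - x)) by (field; auto).
  rewrite Rabs_mult. pose proof (Rabs_pos (y - x)). nra.
Qed.

Lemma dloc0 f x l : derivable_pt_lim f x l -> (exists d, 0 < d /\ forall y, Rabs (y - x) < d -> f y = f x) -> l = 0.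
Proof.
  intros H [d [Hd Hc]]. cut (Rabs l <= 0). intros Hl; apply abs_le in Hl; lra.
  apply Rle_plus_epsilon. intros e He. 
  destruct (dlocal f x l e H He) as [d2 [Hd2 H2]].
  set (y := x + Rmin d d2 / 2).
  assert (Hm : 0 < Rmin d d2) by (apply Rmin_pos; auto).
  assert (Hy: Rabs (y - x) = Rmin d d2 / 2). { unfold y. replace (x + Rmin d d2 / 2 - x) with (Rmin d d2 / 2) by ring. apply Rabs_right; lra. }
  pose proof (Rmin_l d d2). pose proof (Rmin_r d d2).
  specialize (H2 y ltac:(lra)). rewrite (Hc y ltac:(lra)) in H2.
  replace (f x - f x - l * (y - x)) with (- (l * (y-x))) in H2 by ring.
  rewrite Rabs_Ropp, Rabs_mult, Hy in H2.
  assert (Rabs l <= e) by (apply Rmult_le_reg_r with (Rmin d d2 / 2); lra). lra.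
Qed.

Lemma cousin (P : R -> R -> Prop) a b : a <= b ->
  (forall c d e, a <= c -> c <= d -> d <= e -> e <= b -> P c d -> P d e -> P c e) ->
  (forall x, a <= x <= b -> exists δ, 0 < δ /\
      forall c d, a <= c -> c <= x -> x <= d -> d <= b -> d - c < δ -> P c d) ->
  P a b.
Proof.
  intros Hab Htr Hloc.
  set (E := fun y => a <= y <= b /\ P a y).
  assert (HE: E a). { destruct (Hloc a) as [δ [Hδ H]]; [lra|]. split; [lra|]. apply H; lra. }
  assert (Hb: bound E) by (exists b; intros y [Hy _]; lra).
  destruct (completeness E Hb (ex_intro _ a HE)) as [s [Hs1 Hs2]].
  assert (a <= s) by (apply Hs1; auto).
  assert (s <= b) by (apply Hs2; intros y [? _]; lra).
  destruct (Hloc s) as [δ [Hδ Hs]]; [lra|].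
  assert (Hex : exists x, E x /\ s - δ/2 < x).
  { apply NNPP; intro Hn. assert (s <= s - δ/2). apply Hs2. intros y Ey.
    apply Rnot_lt_le. intro. apply Hn. exists y; auto. lra. }
  destruct Hex as [x [[Hx Pax] Hx2]].
  assert (x <= s) by (apply Hs1; split; auto).
  set (d := Rmin b (s + δ/2)).
  assert (Hd1 : s <= d) by (unfold d, Rmin; destruct Rle_dec; lra).
  assert (Hd2 : d <= b) by (unfold d, Rmin; destruct Rle_dec; lra).
  assert (Hd3 : d <= s + δ/2) by (unfold d, Rmin; destruct Rle_dec; lra).
  assert (Pxd: P x d) by (apply Hs; lra).
  assert (Ed : E d) by (split; [lra|]; apply Htr with x; auto; lra).
  assert (d <= s) by (apply Hs1; auto).
  unfold d, Rmin in *. destruct Rle_dec. destruct Ed; auto. lra.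
Qed.

Definition lenf (al be c d : R) := Rmax 0 (Rmin be d - Rmax al c).

Lemma lenf_add al be c d e : c <= d -> d <= e -> al <= be ->
  lenf al be c d + lenf al be d e = lenf al be c e.
Proof. intros. unfold lenf, Rmax, Rmin. repeat destruct Rle_dec; lra. Qed.
Lemma lenf_nonneg al be c d : 0 <= lenf al be c d.
Proof. unfold lenf; apply Rmax_l. Qed.
Lemma lenf_le al be c d : al <= be -> lenf al be c d <= be - al.
Proof. intros. unfold lenf, Rmax, Rmin. repeat destruct Rle_dec; lra. Qed.
Lemma lenf_in al be c d : al < c -> c <= d -> d < be -> lenf al be c d = d - c.
Proof. intros. unfold lenf, Rmax, Rmin. repeat destruct Rle_dec; lra. Qed.

Definition lipon (a b : R) (h : R -> R) := exists K, 0 <= K /\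
  forall s t, a <= s <= b -> a <= t <= b -> Rabs (h s - h t) <= K * Rabs (s - t).

Lemma mvi_core h a b M N : a <= b -> negligible N -> lipon a b h ->
  (forall x, a <= x <= b -> ~ N x -> exists l, derivable_pt_lim h x l /\ l <= M) ->
  h b - h a <= M * (b - a).
Proof.
  intros Hab HN [K [HK Hlip]] Hd.
  set (K' := K + Rabs M + 1).
  assert (HK' : 0 < K') by (unfold K'; pose proof (Rabs_pos M); lra).
  assert (HKM : K <= M + K') by (unfold K'; pose proof (Rle_abs (-M)); rewrite Rabs_Ropp in *; lra).
  apply Rle_plus_epsilon. intros e He.
  set (e1 := e / (2 * (b - a + 1))). set (eta := e / (2 * K')).
  assert (He1 : 0 < e1) by (unfold e1; apply Rdiv_lt_0_compat; lra).
  assert (Heta : 0 < eta) by (unfold eta; apply Rdiv_lt_0_compat; lra).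
  destruct (HN eta Heta) as [ak [bk [Hle [Hcov Hsum]]]].
  set (P := fun c d => exists m, h d - h c <= (M + e1) * (d - c) + K' * rsum m (fun j => lenf (ak j) (bk j) c d)).
  assert (HP : P a b).
  { apply cousin; auto.
    - intros c d f Hc Hcd Hdf Hf [m1 H1] [m2 H2]. exists (Nat.max m1 m2).
      assert (rsum m1 (fun j => lenf (ak j) (bk j) c d) <= rsum (Nat.max m1 m2) (fun j => lenf (ak j) (bk j) c d))
        by (apply rsum_mono; [lia| intros; apply lenf_nonneg]).
      assert (rsum m2 (fun j => lenf (ak j) (bk j) d f) <= rsum (Nat.max m1 m2) (fun j => lenf (ak j) (bk j) d f))
        by (apply rsum_mono; [lia| intros; apply lenf_nonneg]).
      assert (rsum (Nat.max m1 m2) (fun j => lenf (ak j) (bk j) c f) =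
              rsum (Nat.max m1 m2) (fun j => lenf (ak j) (bk j) c d) + rsum (Nat.max m1 m2) (fun j => lenf (ak j) (bk j) d f)).
      { rewrite <- rsum_plus. apply rsum_ext. intros. rewrite lenf_add; auto. }
      nra.
    - intros x Hx. destruct (classic (N x)) as [Nx | Nx].
      + destruct (Hcov x Nx) as [j Hj].
        exists (Rmin (x - ak j) (bk j - x)). split. apply Rmin_pos; lra.
        intros c d Hc Hcx Hxd Hdb Hcd. exists (S j).
        pose proof (Rmin_l (x - ak j) (bk j - x)). pose proof (Rmin_r (x - ak j) (bk j - x)).
        assert (Hl : lenf (ak j) (bk j) c d = d - c) by (apply lenf_in; lra).
        assert (lenf (ak j) (bk j) c d <= rsum (S j) (fun j => lenf (ak j) (bk j) c d))
          by (apply (rsum_term (S j) (fun j => lenf (ak j) (bk j) c d)); [lia | intros; apply lenf_nonneg]).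
        assert (Hq : Rabs (h d - h c) <= K * Rabs (d - c)) by (apply Hlip; lra).
        rewrite (Rabs_right (d - c)) in Hq by lra. apply abs_le in Hq.
        assert (K * (d - c) <= (M + e1) * (d - c) + K' * (d - c)) by nra.
        nra.
      + destruct (Hd x Hx Nx) as [l [Hl HlM]].
        destruct (dlocal h x l e1 Hl He1) as [δ [Hδ Hloc]].
        exists δ; split; auto. intros c d Hc Hcx Hxd Hdb Hcd. exists 0%nat. simpl.
        assert (Hq1 := Hloc d ltac:(apply abs_intro_lt; lra)).
        assert (Hq2 := Hloc c ltac:(apply abs_intro_lt; lra)).
        rewrite (Rabs_right (d - x)) in Hq1 by lra. rewrite (Rabs_left1 (c - x)) in Hq2 by lra.
        apply abs_le in Hq1. apply abs_le in Hq2. nra. }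
  destruct HP as [m Hm].
  assert (rsum m (fun j => lenf (ak j) (bk j) a b) <= eta).
  { eapply Rle_trans; [| apply (Hsum m)]. apply rsum_le. intros; apply lenf_le; auto. }
  assert (e1 * (b - a) <= e / 2).
  { unfold e1. apply Rmult_le_reg_r with (2 * (b - a + 1)). lra.
    field_simplify; try lra; try nra. }
  assert (K' * eta = e / 2) by (unfold eta; field; lra).
  assert (K' * rsum m (fun j => lenf (ak j) (bk j) a b) <= K' * eta) by (apply Rmult_le_compat_l; lra).
  nra.
Qed.

Lemma lipon_sub a b c d h : a <= c -> d <= b -> lipon a b h -> lipon c d h.
Proof. intros H1 H2 [K [HK H]]. exists K; split; auto. intros; apply H; lra. Qed.

Lemma mvi h a b M N : a < b -> negligible N -> lipon a b h ->
  (forall x, a < x < b -> ~ N x -> exists l, derivable_pt_lim h x l /\ l <= M) ->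
  h b - h a <= M * (b - a).
Proof.
  intros Hab HN Hl Hd. destruct Hl as [K [HK Hlip]].
  apply Rle_plus_epsilon. intros e He.
  set (C := 2 * (K + Rabs M) + 1).
  assert (HC : 1 <= C) by (unfold C; pose proof (Rabs_pos M); lra).
  set (eta := Rmin ((b - a) / 4) (e / C)).
  assert (Heta : 0 < eta) by (unfold eta; apply Rmin_pos; [lra| apply Rdiv_lt_0_compat; lra]).
  assert (Heta1 : eta <= (b - a) / 4) by apply Rmin_l.
  assert (Heta2 : eta <= e / C) by apply Rmin_r.
  assert (Hls : lipon (a + eta) (b - eta) h).
  { apply lipon_sub with a b. lra. lra. exists K; split; auto. }
  assert (Hc : h (b - eta) - h (a + eta) <= M * (b - eta - (a + eta))).
  { apply mvi_core with N; auto. lra. intros x Hx Nx; apply Hd; auto; lra. }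
  assert (H1 : Rabs (h b - h (b - eta)) <= K * Rabs (b - (b - eta))) by (apply Hlip; lra).
  assert (H2 : Rabs (h (a + eta) - h a) <= K * Rabs (a + eta - a)) by (apply Hlip; lra).
  replace (b - (b - eta)) with eta in H1 by ring. replace (a + eta - a) with eta in H2 by ring.
  rewrite (Rabs_right eta) in H1, H2 by lra. apply abs_le in H1. apply abs_le in H2.
  assert (Hm : - M <= Rabs M) by (rewrite <- Rabs_Ropp; apply Rle_abs).
  assert (eta * C <= e) by (apply Rmult_le_reg_r with (/ C); [apply Rinv_0_lt_compat; lra|];
     replace (eta * C * / C) with eta by (field; lra); exact Heta2).
  unfold C in *. nra.
Qed.

Lemma mvi_ge h a b m N : a < b -> negligible N -> lipon a b h ->
  (forall x, a < x < b -> ~ N x -> exists l, derivable_pt_lim h x l /\ m <= l) ->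
  m * (b - a) <= h b - h a.
Proof.
  intros Hab HN [K [HK Hl]] Hd.
  assert (H := mvi (fun t => - h t) a b (- m) N Hab HN).
  cut ((- h b) - (- h a) <= - m * (b - a)). lra.
  apply H.
  - exists K; split; auto. intros. replace (- h s - - h t) with (- (h s - h t)) by ring.
    rewrite Rabs_Ropp; auto.
  - intros x Hx Nx. destruct (Hd x Hx Nx) as [l [H1 H2]]. exists (- l). split. apply dopp; auto. lra.
Qed.

Lemma mvi_abs h a b c e N : a < b -> negligible N -> lipon a b h ->
  (forall x, a < x < b -> ~ N x -> exists l, derivable_pt_lim h x l /\ Rabs (l - c) <= e) ->
  Rabs (h b - h a - c * (b - a)) <= e * (b - a).
Proof.
  intros Hab HN Hl Hd. apply abs_intro. split.
  - assert (H := mvi_ge h a b (c - e) N Hab HN Hl). 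
    assert ((c - e) * (b - a) <= h b - h a). apply H. intros x Hx Nx.
    destruct (Hd x Hx Nx) as [l [H1 H2]]. exists l; split; auto. apply abs_le in H2; lra. nra.
  - assert (H := mvi h a b (c + e) N Hab HN Hl).
    assert (h b - h a <= (c + e) * (b - a)). apply H. intros x Hx Nx.
    destruct (Hd x Hx Nx) as [l [H1 H2]]. exists l; split; auto. apply abs_le in H2; lra. nra.
Qed.

Lemma mvi_const h a b N : a < b -> negligible N -> lipon a b h ->
  (forall x, a < x < b -> ~ N x -> derivable_pt_lim h x 0) -> h b = h a.
Proof.
  intros Hab HN Hl Hd.
  assert (H := mvi_abs h a b 0 0 N Hab HN Hl).
  assert (Rabs (h b - h a - 0 * (b - a)) <= 0 * (b - a)).
  apply H. intros x Hx Nx. exists 0; split; auto. rewrite Rminus_diag, Rabs_R0; lra.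
  apply abs_le in H0. lra.
Qed.

Lemma not_negl_interval c d N : c < d -> negligible N -> exists t, c < t < d /\ ~ N t.
Proof.
  intros Hcd HN. apply NNPP; intro Hn.
  assert (H := mvi (fun t => t) c d 0 N Hcd HN).
  assert (d - c <= 0 * (d - c)). apply H.
  exists 1; split; [lra|]. intros; rewrite Rmult_1_l; lra.
  intros x Hx Nx. exfalso. apply Hn. exists x; auto. lra.
Qed.

Lemma negl_mono (A B : R -> Prop) : negligible A -> (forall x, B x -> A x) -> negligible B.
Proof.
  intros H HBA e He. destruct (H e He) as [a [b [H1 [H2 H3]]]]. exists a, b; split; auto; split; auto.
Qed.

Lemma negl_union (A B : R -> Prop) : negligible A -> negligible B -> negligible (fun x => A x \/ B x).
Proof.
  intros HA HB e He.
  destruct (HA (e/2) ltac:(lra)) as [a1 [b1 [H11 [H12 H13]]]].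
  destruct (HB (e/2) ltac:(lra)) as [a2 [b2 [H21 [H22 H23]]]].
  exists (fun k => if Nat.even k then a1 (Nat.div2 k) else a2 (Nat.div2 k)).
  exists (fun k => if Nat.even k then b1 (Nat.div2 k) else b2 (Nat.div2 k)).
  split; [|split].
  - intros k; destruct (Nat.even k); auto.
  - intros x [Hx | Hx].
    + destruct (H12 x Hx) as [j Hj]. exists (2 * j)%nat. rewrite Nat.even_even, Nat.div2_double; auto.
    + destruct (H22 x Hx) as [j Hj]. exists (2 * j + 1)%nat. rewrite Nat.even_odd, Nat.div2_odd'; auto.
  - set (f := fun k => (if Nat.even k then b1 (Nat.div2 k) else b2 (Nat.div2 k)) -
                       (if Nat.even k then a1 (Nat.div2 k) else a2 (Nat.div2 k))).
    assert (Hf : forall N, rsum (2 * N) f = rsum N (fun k => b1 k - a1 k) + rsum N (fun k => b2 k - a2 k)).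
    { induction N. simpl; lra. replace (2 * S N)%nat with (S (S (2 * N))) by lia.
      simpl rsum.
      replace (S (N + (N + 0))) with (2 * N + 1)%nat by lia.
      replace (N + (N + 0))%nat with (2 * N)%nat by lia.
      rewrite IHN. unfold f.
      rewrite Nat.even_odd, Nat.div2_odd', Nat.even_even, Nat.div2_double. lra. }
    intros N. apply Rle_trans with (rsum (2 * N) f).
    apply rsum_mono. lia. intros i _. unfold f. destruct (Nat.even i); [specialize (H11 (Nat.div2 i)) | specialize (H21 (Nat.div2 i))]; lra.
    rewrite Hf. specialize (H13 N). specialize (H23 N). lra.
Qed.

Lemma ae_and a b (P Q : R -> Prop) : ae_on a b P -> ae_on a b Q -> ae_on a b (fun t => P t /\ Q t).
Proof.
  intros HP HQ. unfold ae_on in *. apply negl_mono with (fun t => (a < t < b /\ ~ P t) \/ (a < t < b /\ ~ Q t)).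
  apply negl_union; auto. intros x [Hx Hn]. apply not_and_or in Hn. tauto.
Qed.

Lemma ae_exists a b (P : R -> Prop) c d : ae_on a b P -> a <= c -> c < d -> d <= b ->
  exists t, c < t < d /\ P t.
Proof.
  intros H Hc Hcd Hd. destruct (not_negl_interval c d _ Hcd H) as [t [Ht Hn]].
  exists t; split; auto. apply NNPP; intro. apply Hn; split; auto; lra.
Qed.

Lemma lip_bound a b h : a <= b -> lipon a b h -> exists B, 0 <= B /\ forall t, a <= t <= b -> Rabs (h t) <= B.
Proof.
  intros Hab [K [HK H]]. exists (Rabs (h a) + K * (b - a)). split.
  pose proof (Rabs_pos (h a)); nra.
  intros t Ht. specialize (H t a Ht ltac:(lra)). rewrite (Rabs_right (t - a)) in H by lra.
  pose proof (Rabs_triang (h t - h a) (h a)). replace (h t - h a + h a) with (h t) in H0 by ring. nra.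
Qed.

Lemma lip_const a b c : lipon a b (fun _ => c).
Proof. exists 0; split; [lra|]. intros. replace (c - c) with 0 by ring. rewrite Rabs_R0. pose proof (Rabs_pos (s - t)); nra. Qed.

Lemma lip_id a b : lipon a b (fun t => t).
Proof. exists 1; split; [lra|]. intros; lra. Qed.

Lemma lip_plus a b f g : lipon a b f -> lipon a b g -> lipon a b (fun t => f t + g t).
Proof.
  intros [K1 [HK1 H1]] [K2 [HK2 H2]]. exists (K1 + K2); split; [lra|]. intros s t Hs Ht.
  replace (f s + g s - (f t + g t)) with ((f s - f t) + (g s - g t)) by ring.
  eapply Rle_trans. apply Rabs_triang. specialize (H1 s t Hs Ht). specialize (H2 s t Hs Ht). lra.
Qed.

Lemma lip_opp a b f : lipon a b f -> lipon a b (fun t => - f t).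
Proof.
  intros [K1 [HK1 H1]]. exists K1; split; auto. intros s t Hs Ht.
  replace (- f s - - f t) with (- (f s - f t)) by ring. rewrite Rabs_Ropp; auto.
Qed.

Lemma lip_minus a b f g : lipon a b f -> lipon a b g -> lipon a b (fun t => f t - g t).
Proof. intros. apply (lip_plus a b f (fun t => - g t)); auto. apply lip_opp; auto. Qed.

Lemma lip_mult a b f g : a <= b -> lipon a b f -> lipon a b g -> lipon a b (fun t => f t * g t).
Proof.
  intros Hab Hf Hg. destruct (lip_bound a b f Hab Hf) as [Bf [HBf Hbf]].
  destruct (lip_bound a b g Hab Hg) as [Bg [HBg Hbg]].
  destruct Hf as [K1 [HK1 H1]], Hg as [K2 [HK2 H2]].
  exists (K1 * Bg + Bf * K2). split. nra. intros s t Hs Ht.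
  replace (f s * g s - f t * g t) with ((f s - f t) * g s + f t * (g s - g t)) by ring.
  eapply Rle_trans. apply Rabs_triang. rewrite !Rabs_mult.
  specialize (H1 s t Hs Ht). specialize (H2 s t Hs Ht). specialize (Hbf t Ht). specialize (Hbg s Hs).
  pose proof (Rabs_pos (f s - f t)). pose proof (Rabs_pos (g s - g t)). pose proof (Rabs_pos (s - t)).
  pose proof (Rabs_pos (f t)). pose proof (Rabs_pos (g s)).
  assert (Rabs (f s - f t) * Rabs (g s) <= K1 * Rabs (s - t) * Bg) by (apply Rmult_le_compat; auto).
  assert (Rabs (f t) * Rabs (g s - g t) <= Bf * (K2 * Rabs (s - t))) by (apply Rmult_le_compat; auto).
  nra.
Qed.

Lemma lip_inv a b g c0 : 0 < c0 -> lipon a b g -> (forall t, a <= t <= b -> c0 <= g t) -> lipon a b (fun t => / g t).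
Proof.
  intros Hc [K [HK H]] Hg. exists (K / (c0 * c0)). split. unfold Rdiv; apply Rmult_le_pos; [lra| left; apply Rinv_0_lt_compat; nra].
  intros s t Hs Ht. pose proof (Hg s Hs). pose proof (Hg t Ht).
  replace (/ g s - / g t) with ((g t - g s) / (g s * g t)) by (field; lra).
  unfold Rdiv. rewrite Rabs_mult, Rabs_inv, (Rabs_right (g s * g t)) by nra.
  rewrite <- Rabs_Ropp. replace (- (g t - g s)) with (g s - g t) by ring.
  specialize (H s t Hs Ht). pose proof (Rabs_pos (s - t)). pose proof (Rabs_pos (g s - g t)).
  assert (/ (g s * g t) <= / (c0 * c0)) by (apply Rinv_le_contravar; nra).
  assert (0 < / (g s * g t)) by (apply Rinv_0_lt_compat; nra).
  apply Rle_trans with (K * Rabs (s - t) * / (c0 * c0)). apply Rmult_le_compat; auto; lra. nra.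
Qed.

Lemma lip_div a b f g c0 : a <= b -> 0 < c0 -> lipon a b f -> lipon a b g ->
  (forall t, a <= t <= b -> c0 <= g t) -> lipon a b (fun t => f t / g t).
Proof. intros. apply (lip_mult a b f (fun t => / g t)); auto. apply lip_inv with c0; auto. Qed.

Lemma lip_rsum a b N (F : nat -> R -> R) : a <= b -> (forall i, (i < N)%nat -> lipon a b (F i)) ->
  lipon a b (fun t => rsum N (fun i => F i t)).
Proof.
  intros Hab. induction N; intros H; simpl. apply lip_const.
  apply (lip_plus a b (fun t => rsum N (fun i => F i t)) (F N)). apply IHN; intros; apply H; lia. apply H; lia.
Qed.

Lemma lip_dot a b n (x y : R -> vec) : a <= b -> (forall i, (i < n)%nat -> lipon a b (fun t => x t i)) ->
  (forall i, (i < n)%nat -> lipon a b (fun t => y t i)) -> lipon a b (fun t => dot n (x t) (y t)).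
Proof.
  intros Hab Hx Hy. unfold dot. apply (lip_rsum a b n (fun i t => x t i * y t i)); auto.
  intros i Hi. apply (lip_mult a b (fun t => x t i) (fun t => y t i)); auto.
Qed.

Lemma lip_cont a b h s : lipon a b h -> forall e, 0 < e -> exists d, 0 < d /\
  forall t, a <= s <= b -> a <= t <= b -> Rabs (t - s) < d -> Rabs (h t - h s) < e.
Proof.
  intros [K [HK H]] e He. exists (e / (K + 1)). split. apply Rdiv_lt_0_compat; lra.
  intros t Hs Ht Hd. specialize (H t s Ht Hs). pose proof (Rabs_pos (t - s)).
  assert (K * Rabs (t - s) < e).
  { apply Rle_lt_trans with ((K + 1) * Rabs (t - s)). nra.
    apply Rmult_lt_reg_r with (/ (K + 1)). apply Rinv_0_lt_compat; lra.
    replace ((K + 1) * Rabs (t - s) * / (K + 1)) with (Rabs (t - s)) by (field; lra). exact Hd. }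
  lra.
Qed.

Lemma pos_lower a b g : a <= b -> lipon a b g -> (forall t, a <= t <= b -> 0 < g t) ->
  exists c0, 0 < c0 /\ forall t, a <= t <= b -> c0 <= g t.
Proof.
  intros Hab Hl Hp.
  apply (cousin (fun c d => exists c0, 0 < c0 /\ forall t, c <= t <= d -> c0 <= g t)); auto.
  - intros c d e Hc Hcd Hde He [c1 [Hc1 H1]] [c2 [Hc2 H2]]. exists (Rmin c1 c2). split. apply Rmin_pos; auto.
    intros t Ht. destruct (Rle_dec t d). specialize (H1 t ltac:(lra)). pose proof (Rmin_l c1 c2); lra.
    specialize (H2 t ltac:(lra)). pose proof (Rmin_r c1 c2); lra.
  - intros x Hx. pose proof (Hp x Hx) as Hgx.
    destruct (lip_cont a b g x Hl (g x / 2) ltac:(lra)) as [d [Hd Hq]].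
    exists d; split; auto. intros c e Hc Hcx Hxe He Hce. exists (g x / 2). split. lra.
    intros t Ht. assert (Hr : Rabs (g t - g x) < g x / 2) by (apply Hq; try lra; apply abs_intro_lt; lra).
    apply abs_lt in Hr. lra.
Qed.

Definition Gd n (tau tau' u u' : R -> vec) (beta : R -> R) (lam : vec) (k : R) t :=
  (forall i, (i < n)%nat -> derivable_pt_lim (fun s => tau s i) t (tau' t i)) /\
  (forall i, (i < n)%nat -> derivable_pt_lim (fun s => u s i) t (u' t i)) /\
  veq n (fun i => u' t i + dot n (u t) (tau' t) * tau t i)
           (fun i => beta t * (lam i - dot n lam (tau t) * tau t i)) /\
  veq n (fun i => vnorm n (u t) * tau' t i) (fun i => k * u t i).

Lemma ae_use L (P : R -> Prop) x : ~ (0 < x < L /\ ~ P x) -> 0 < x < L -> P x.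
Proof. intros H Hx. apply NNPP; intro; apply H; auto. Qed.

Lemma W1_lip n L g g' : 0 <= L -> W1inf n 0 L g g' -> forall i, (i < n)%nat -> lipon 0 L (fun t => g t i).
Proof.
  intros HL [[K HK] _] i Hi. exists (Rabs K); split. apply Rabs_pos.
  intros s t Hs Ht. eapply Rle_trans. apply HK; auto. pose proof (Rle_abs K). pose proof (Rabs_pos (s - t)). nra.
Qed.

Lemma tau_perp n L (tau tau' : R -> vec) x :
  (forall t, 0 <= t <= L -> dot n (tau t) (tau t) = 1) -> 0 < x < L ->
  (forall i, (i < n)%nat -> derivable_pt_lim (fun s => tau s i) x (tau' x i)) ->
  dot n (tau x) (tau' x) = 0.
Proof.
  intros Hs Hx Hd.
  assert (H := ddot n tau tau (tau' x) (tau' x) x Hd Hd).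
  assert (dot n (tau' x) (tau x) + dot n (tau x) (tau' x) = 0).
  { apply (dloc0 _ x _ H). exists (Rmin x (L - x)). split. apply Rmin_pos; lra.
    intros y Hy. apply abs_lt in Hy. pose proof (Rmin_l x (L - x)). pose proof (Rmin_r x (L - x)).
    rewrite !Hs; lra. }
  rewrite dot_sym in H0. lra.
Qed.

Definition Qf n (z lam : vec) (tau : R -> vec) t :=
  (dot n z (tau t) * dot n z (tau t)) / (1 - dot n lam (tau t) * dot n lam (tau t)).

Lemma lip_tau_dot n L (tau : R -> vec) (z : vec) a b : 0 <= a -> a <= b -> b <= L ->
  (forall i, (i < n)%nat -> lipon 0 L (fun t => tau t i)) -> lipon a b (fun t => dot n z (tau t)).
Proof.
  intros Ha Hab Hb Hl. apply (lip_dot a b n (fun _ => z) tau); auto. intros; apply lip_const.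
  intros i Hi. apply lipon_sub with 0 L; auto.
Qed.

Lemma lip_D n L (tau : R -> vec) lam a b : 0 <= a -> a <= b -> b <= L ->
  (forall i, (i < n)%nat -> lipon 0 L (fun t => tau t i)) ->
  lipon a b (fun t => 1 - dot n lam (tau t) * dot n lam (tau t)).
Proof.
  intros. apply (lip_minus a b (fun _ => 1)). apply lip_const.
  apply (lip_mult a b (fun t => dot n lam (tau t)) (fun t => dot n lam (tau t))); auto;
  apply lip_tau_dot with L; auto.
Qed.

Lemma lip_Q n L (tau : R -> vec) lam z a b : 0 <= a -> a <= b -> b <= L ->
  (forall i, (i < n)%nat -> lipon 0 L (fun t => tau t i)) ->
  (forall t, a <= t <= b -> dot n lam (tau t) * dot n lam (tau t) < 1) ->
  lipon a b (Qf n z lam tau).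
Proof.
  intros Ha Hab Hb Hl Hg.
  destruct (pos_lower a b (fun t => 1 - dot n lam (tau t) * dot n lam (tau t)) Hab) as [c0 [Hc0 Hc]].
  apply lip_D with L; auto. intros t Ht; specialize (Hg t Ht); lra.
  unfold Qf. apply (lip_div a b (fun t => dot n z (tau t) * dot n z (tau t)) (fun t => 1 - dot n lam (tau t) * dot n lam (tau t)) c0); auto.
  apply (lip_mult a b (fun t => dot n z (tau t)) (fun t => dot n z (tau t))); auto; apply lip_tau_dot with L; auto.
  apply lip_D with L; auto.
Qed.

Lemma Q_deriv0 n L (tau tau' : R -> vec) lam z x :
  (forall t, 0 <= t <= L -> dot n (tau t) (tau t) = 1) -> dot n lam lam = 1 -> 0 < x < L ->
  (forall i, (i < n)%nat -> derivable_pt_lim (fun s => tau s i) x (tau' x i)) ->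
  dot n z lam = 0 ->
  dot n lam (tau x) * dot n lam (tau x) < 1 ->
  lin_dep3 n (tau x) (tau' x) lam ->
  derivable_pt_lim (Qf n z lam tau) x 0.
Proof.
  intros Hs Hlam Hx Hd Hz Hg [al [be [ga [Hnz Hv]]]].
  assert (Hperp := tau_perp n L tau tau' x Hs Hx Hd).
  assert (Htt : dot n (tau x) (tau x) = 1) by (apply Hs; lra).
  set (g := dot n lam (tau x)) in *.
  assert (Hcomb : forall w, dot n w (fun i => al * tau x i + be * tau' x i + ga * lam i) = 0).
  { intros w. rewrite (dot_ext n w _ w (fun _ => 0)); auto. rewrite dot_sym, dot_zero_l; auto. }
  assert (Hc1 := Hcomb (tau x)). assert (Hc2 := Hcomb lam).
  assert (E : forall w, dot n w (fun i => al * tau x i + be * tau' x i + ga * lam i) =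
     al * dot n w (tau x) + be * dot n w (tau' x) + ga * dot n w lam).
  { intros w. unfold dot. rewrite <- (rsum_scal n al), <- (rsum_scal n be), <- (rsum_scal n ga).
    rewrite <- !rsum_plus. apply rsum_ext. intros; ring. }
  rewrite E in Hc1, Hc2. rewrite (dot_sym n (tau x) lam) in Hc1. fold g in Hc1.
  rewrite Htt, Hperp in Hc1. rewrite Hlam in Hc2. fold g in Hc2.
  assert (Hbe : be <> 0).
  { intro Hb. subst be. apply Hnz. ring_simplify in Hc1. ring_simplify in Hc2. assert (H : ga * (1 - g * g) = 0) by (replace (ga * (1 - g * g)) with ((al*g+ga) - g*(al+ga*g)) by ring; rewrite Hc1, Hc2; ring).
    assert (ga = 0). { apply Rmult_integral in H. destruct H; auto. lra. } subst ga. repeat split; lra. }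
  set (a := - al / be). set (c := - ga / be).
  assert (Htp : forall w, dot n w (tau' x) = a * dot n w (tau x) + c * dot n w lam).
  { intros w. rewrite <- dot_lin_r. apply dot_ext; auto. intros i Hi. specialize (Hv i Hi). simpl in Hv.
    unfold a, c. field_simplify; auto. apply Rmult_eq_reg_l with be; auto. field_simplify; auto. lra. }
  assert (Hac : a + c * g = 0).
  { assert (H1 := Htp (tau x)). rewrite Hperp, Htt, (dot_sym n (tau x) lam) in H1. fold g in H1. lra. }
  assert (HD : 1 - g * g <> 0) by lra.
  unfold Qf.
  eapply dval; [| apply ddiv; [apply dmult; apply ddot_const; exact Hd | apply dminus; [apply dconst | apply dmult; apply ddot_const; exact Hd] | exact HD]].
  fold g. rewrite (Htp z), (Htp lam), Hz, Hlam. fold g.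
  replace a with (- c * g) by lra. field. unfold Rsqr; intro Hq; apply HD; apply Rmult_integral in Hq; tauto.
Qed.

Lemma Q_const n L (tau tau' u : R -> vec) lam k z c d :
  (forall t, 0 <= t <= L -> dot n (tau t) (tau t) = 1) -> dot n lam lam = 1 ->
  (forall i, (i < n)%nat -> lipon 0 L (fun t => tau t i)) ->
  ae_on 0 L (fun t => forall i, (i < n)%nat -> derivable_pt_lim (fun s => tau s i) t (tau' t i)) ->
  (forall t, (0 <= t <= L /\ 0 < k * vnorm n (u t)) -> lin_dep3 n (tau t) (tau' t) lam) ->
  dot n z lam = 0 -> 0 <= c -> c < d -> d <= L ->
  (forall t, c <= t <= d -> 0 < k * vnorm n (u t) /\ dot n lam (tau t) * dot n lam (tau t) < 1) ->
  Qf n z lam tau d = Qf n z lam tau c.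
Proof.
  intros Hs Hlam Hl Hae Hdep Hz Hc Hcd Hd Hcd2.
  apply mvi_const with (fun t => 0 < t < L /\ ~ (forall i, (i < n)%nat -> derivable_pt_lim (fun s => tau s i) t (tau' t i))); auto.
  apply lip_Q with L; auto; try lra. intros t Ht; apply Hcd2; auto.
  intros x Hx Nx. assert (Nx2 : forall i, (i < n)%nat -> derivable_pt_lim (fun s => tau s i) x (tau' x i)) by (apply NNPP; intro; apply Nx; split; [lra|auto]).
  apply Q_deriv0 with L tau'; auto. lra. apply Hcd2; lra. apply Hdep. split. lra. apply Hcd2; lra.
Qed.

Lemma dot_scal_r n c x y : dot n x (fun i => c * y i) = c * dot n x y.
Proof. unfold dot. rewrite <- rsum_scal. apply rsum_ext; intros; ring. Qed.
Lemma dot_scal_l n c x y : dot n (fun i => c * x i) y = c * dot n x y.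
Proof. unfold dot. rewrite <- rsum_scal. apply rsum_ext; intros; ring. Qed.

Lemma vnorm_nonneg n x : 0 <= vnorm n x.
Proof. apply sqrt_pos. Qed.
Lemma vnorm_sq n x : vnorm n x * vnorm n x = dot n x x.
Proof. unfold vnorm. apply sqrt_sqrt, dot_nonneg. Qed.
Lemma vnorm_zero n x : vnorm n x = 0 -> vzero n x.
Proof. intros H. apply dot_eq0. rewrite <- vnorm_sq, H; ring. Qed.
Lemma dot_vzero n x y : vzero n y -> dot n x y = 0.
Proof. intros H. rewrite (dot_ext n x y x (fun _ => 0)); auto. rewrite dot_sym; apply dot_zero_l. Qed.

Lemma par_dot n (u tau' : vec) k : veq n (fun i => vnorm n u * tau' i) (fun i => k * u i) ->
  dot n u tau' = k * vnorm n u.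
Proof.
  intros H. assert (H1 : vnorm n u * dot n u tau' = k * (vnorm n u * vnorm n u)).
  { rewrite <- dot_scal_r, vnorm_sq, <- dot_scal_r. apply dot_ext; auto. }
  destruct (Req_dec (vnorm n u) 0) as [H0|H0].
  rewrite H0, Rmult_0_r. rewrite dot_sym. apply dot_vzero, vnorm_zero; auto.
  apply Rmult_eq_reg_l with (vnorm n u); auto. lra.
Qed.

Lemma par_norm n (u tau' : vec) k : veq n (fun i => vnorm n u * tau' i) (fun i => k * u i) ->
  0 < vnorm n u -> dot n tau' tau' = k * k.
Proof.
  intros H Hp. 
  assert (H1 : vnorm n u * vnorm n u * dot n tau' tau' = k * k * (vnorm n u * vnorm n u)).
  { set (c := vnorm n u). 
    assert (E1 : c * c * dot n tau' tau' = dot n (fun i => c * tau' i) (fun i => c * tau' i)) by (rewrite dot_scal_l, dot_scal_r; ring).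
    assert (E2 : k * k * (c * c) = dot n (fun i => k * u i) (fun i => k * u i)) by (rewrite dot_scal_l, dot_scal_r; unfold c; rewrite vnorm_sq; ring).
    rewrite E1, E2. apply dot_ext; auto. }
  apply Rmult_eq_reg_l with (vnorm n u * vnorm n u). lra. nra.
Qed.

Lemma ode_dot n (u u' tau tau' : vec) b lam p :
  veq n (fun i => u' i + dot n u tau' * tau i) (fun i => b * (lam i - dot n lam tau * tau i)) ->
  dot n p u' = - dot n u tau' * dot n p tau + b * (dot n p lam - dot n lam tau * dot n p tau).
Proof.
  intros H. rewrite (dot_ext n p u' p (fun i => (- dot n u tau' - b * dot n lam tau) * tau i + b * lam i)); auto.
  rewrite dot_lin_r. ring. intros i Hi. specialize (H i Hi). simpl in H. lra.
Qed.

Lemma sqrt_small x e : 0 <= x -> 0 < e -> x < e * e -> sqrt x < e.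
Proof.
  intros Hx He H. rewrite <- (sqrt_square e) by lra. apply sqrt_lt_1; nra.
Qed.

Lemma unit_dot_bound n (x : vec) p : dot n x x = 1 -> Rabs (dot n p x) <= N1 n p.
Proof. intros H. rewrite <- (Rmult_1_l (N1 n p)). apply dot_bound. intros; apply (unit_comp n); auto. Qed.

Lemma vnorm_pos_of_dot n p x : dot n p x <> 0 -> 0 < vnorm n x.
Proof.
  intros H. destruct (vnorm_nonneg n x) as [H1|H1]; auto. exfalso. apply H.
  apply dot_vzero, vnorm_zero; auto.
Qed.

Lemma typeC n L (tau tau' u u' : R -> vec) beta lam k s b0 :
  0 < L -> (forall t, 0 <= t <= L -> dot n (tau t) (tau t) = 1) -> dot n lam lam = 1 -> 0 < k ->
  0 < b0 -> (forall t, 0 <= t <= L -> b0 <= beta t) ->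
  (forall i, (i < n)%nat -> lipon 0 L (fun t => tau t i)) ->
  (forall i, (i < n)%nat -> lipon 0 L (fun t => u t i)) ->
  ae_on 0 L (Gd n tau tau' u u' beta lam k) ->
  0 <= s <= L -> vzero n (u s) -> dot n lam (tau s) * dot n lam (tau s) < 1 ->
  exists d, 0 < d /\ forall t, 0 <= t <= L -> 0 < Rabs (t - s) < d -> 0 < k * vnorm n (u t).
Proof.
  intros HL Hs Hlam Hk Hb0 Hb Hlt Hlu Hae Hs0 Hus Hgs.
  set (gs := dot n lam (tau s)) in *.
  set (p := fun i => 1 * lam i + (- gs) * tau s i).
  assert (Hts : dot n (tau s) (tau s) = 1) by (apply Hs; lra).
  assert (Hpl : dot n p lam = 1 - gs * gs).
  { unfold p. rewrite dot_lin_l, Hlam, (dot_sym n (tau s) lam). fold gs. ring. }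
  assert (Hpt : dot n p (tau s) = 0).
  { unfold p. rewrite dot_lin_l, Hts. fold gs. ring. }
  set (pp := 1 - gs * gs). assert (Hpp : 0 < pp) by (unfold pp; lra).
  set (A := fun t => dot n p lam - dot n lam (tau t) * dot n p (tau t)).
  assert (HA : A s = pp) by (unfold A; rewrite Hpt, Hpl; fold gs; unfold pp; ring).
  assert (HlA : lipon 0 L A).
  { unfold A. apply (lip_minus 0 L (fun _ => dot n p lam)). apply lip_const.
    apply (lip_mult 0 L (fun t => dot n lam (tau t)) (fun t => dot n p (tau t))); try lra;
    apply lip_tau_dot with L; auto; lra. }
  set (uu := fun t => dot n (u t) (u t)).
  assert (Hlu2 : lipon 0 L uu) by (apply lip_dot; auto; lra).
  assert (Huus : uu s = 0) by (unfold uu; apply dot_vzero; auto).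
  set (eta := b0 * pp / (4 * k * (N1 n p + 1))).
  pose proof (N1_nonneg n p) as HN1.
  assert (Heta : 0 < eta) by (unfold eta; apply Rdiv_lt_0_compat; nra).
  assert (Heta2 : k * eta * N1 n p <= b0 * pp / 4).
  { assert (E : k * eta * (N1 n p + 1) = b0 * pp / 4) by (unfold eta; field; lra).
    assert (0 < k * eta) by nra. nra. }
  destruct (lip_cont 0 L A s HlA (pp / 2) ltac:(lra)) as [d1 [Hd1 HA1]].
  destruct (lip_cont 0 L uu s Hlu2 (eta * eta) ltac:(nra)) as [d2 [Hd2 Hu2]].
  exists (Rmin d1 d2). split. apply Rmin_pos; auto.
  pose proof (Rmin_l d1 d2). pose proof (Rmin_r d1 d2).
  assert (Hder : forall x, 0 < x < L -> Rabs (x - s) < Rmin d1 d2 -> Gd n tau tau' u u' beta lam k x ->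
            exists l, derivable_pt_lim (fun r => dot n p (u r)) x l /\ b0 * pp / 4 <= l).
  { intros x Hx Hxs [_ [Hdu [Hode Hpar]]]. exists (dot n p (u' x)). split.
    apply ddot_const; auto.
    rewrite (ode_dot n (u x) (u' x) (tau x) (tau' x) (beta x) lam p Hode).
    rewrite (par_dot n (u x) (tau' x) k Hpar).
    assert (HAx : Rabs (A x - A s) < pp / 2) by (apply HA1; lra).
    assert (Hux : Rabs (uu x - uu s) < eta * eta) by (apply Hu2; lra).
    rewrite Huus, Rminus_0_r in Hux. apply abs_lt in Hux. apply abs_lt in HAx.
    assert (Hvn : vnorm n (u x) < eta) by (apply sqrt_small; [apply dot_nonneg | lra | unfold uu in Hux; lra]).
    pose proof (vnorm_nonneg n (u x)).
    assert (Hpt2 : Rabs (dot n p (tau x)) <= N1 n p) by (apply unit_dot_bound; apply Hs; lra).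
    apply abs_le in Hpt2.
    assert (Hbx : b0 <= beta x) by (apply Hb; lra).
    rewrite HA in HAx. unfold A in HAx.
    assert (k * vnorm n (u x) * Rabs (dot n p (tau x)) <= k * eta * N1 n p).
    { apply Rmult_le_compat; try nra. apply Rabs_pos. apply unit_dot_bound; apply Hs; lra. }
    set (X := dot n p lam - dot n lam (tau x) * dot n p (tau x)) in *.
    assert (HX : 0 <= (beta x - b0) * X) by (apply Rmult_le_pos; lra).
    assert (HB : - (k * vnorm n (u x)) * dot n p (tau x) >= - (k * vnorm n (u x) * Rabs (dot n p (tau x)))).
    { assert (0 <= k * vnorm n (u x)) by nra.
      assert (k * vnorm n (u x) * dot n p (tau x) <= k * vnorm n (u x) * Rabs (dot n p (tau x)))
        by (apply Rmult_le_compat_l; auto; apply Rle_abs). lra. }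
    nra. }
  intros t Ht [Hts1 Hts2].
  assert (Hh : dot n p (u t) <> 0).
  { assert (Hps : dot n p (u s) = 0) by (apply dot_vzero; auto).
    destruct (Rlt_or_le s t) as [Hst | Hst].
    - assert (Hm := mvi_ge (fun r => dot n p (u r)) s t (b0 * pp / 4) _ Hst Hae).
      assert (b0 * pp / 4 * (t - s) <= dot n p (u t) - dot n p (u s)).
      { apply Hm. apply lip_tau_dot with L; auto; lra.
        intros x Hx Nx. apply Hder. lra. apply abs_intro_lt; apply abs_lt in Hts2; lra.
        apply NNPP; intro; apply Nx; split; auto; lra. }
      assert (0 < b0 * pp / 4 * (t - s)) by (apply Rmult_lt_0_compat; nra). lra.
    - assert (Hst' : t < s) by (destruct Hst; auto; subst; rewrite Rminus_diag, Rabs_R0 in Hts1; lra).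
      assert (Hm := mvi_ge (fun r => dot n p (u r)) t s (b0 * pp / 4) _ Hst' Hae).
      assert (b0 * pp / 4 * (s - t) <= dot n p (u s) - dot n p (u t)).
      { apply Hm. apply lip_tau_dot with L; auto; lra.
        intros x Hx Nx. apply Hder. lra. apply abs_intro_lt; apply abs_lt in Hts2; lra.
        apply NNPP; intro; apply Nx; split; auto; lra. }
      assert (0 < b0 * pp / 4 * (s - t)) by (apply Rmult_lt_0_compat; nra). lra. }
  apply Rmult_lt_0_compat; auto. apply vnorm_pos_of_dot with p; auto.
Qed.

Lemma small_zero X K H : 0 < H -> 0 <= K -> (forall h, 0 < h < H -> Rabs X <= K * h) -> X = 0.
Proof.
  intros HH HK Hh. cut (Rabs X <= 0). intros Hx; apply abs_le in Hx; lra.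
  apply Rle_plus_epsilon. intros e He.
  set (h := Rmin (H / 2) (e / (K + 1))).
  assert (0 < h) by (unfold h; apply Rmin_pos; [lra | apply Rdiv_lt_0_compat; lra]).
  assert (h <= H / 2) by apply Rmin_l. assert (h <= e / (K + 1)) by apply Rmin_r.
  specialize (Hh h ltac:(lra)).
  assert (K * h <= e).
  { apply Rle_trans with ((K + 1) * h). nra. 
    apply Rmult_le_reg_r with (/ (K + 1)). apply Rinv_0_lt_compat; lra.
    replace ((K + 1) * h * / (K + 1)) with h by (field; lra). 
    replace (e * / (K + 1)) with (e / (K + 1)) by (unfold Rdiv; ring). lra. }
  lra.
Qed.

Lemma side_const n L (tau tau' u : R -> vec) lam k z a b (left : bool) :
  (forall t, 0 <= t <= L -> dot n (tau t) (tau t) = 1) -> dot n lam lam = 1 ->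
  (forall i, (i < n)%nat -> lipon 0 L (fun t => tau t i)) ->
  ae_on 0 L (fun t => forall i, (i < n)%nat -> derivable_pt_lim (fun s => tau s i) t (tau' t i)) ->
  (forall t, (0 <= t <= L /\ 0 < k * vnorm n (u t)) -> lin_dep3 n (tau t) (tau' t) lam) ->
  dot n z lam = 0 -> 0 <= a -> a < b -> b <= L ->
  (forall t, a <= t <= b -> dot n lam (tau t) * dot n lam (tau t) < 1) ->
  (forall t, a <= t <= b -> (if left then a < t else t < b) -> 0 < k * vnorm n (u t)) ->
  Qf n z lam tau a = Qf n z lam tau b.
Proof.
  intros Hs Hlam Hl Hae Hdep Hz Ha Hab Hb Hg Hu.
  destruct (lip_Q n L tau lam z a b Ha ltac:(lra) Hb Hl Hg) as [K [HK HQ]].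
  apply Rminus_diag_uniq.
  apply small_zero with K (b - a); auto. lra. intros h Hh.
  destruct left.
  - assert (Qf n z lam tau b = Qf n z lam tau (a + h)).
    { apply Q_const with L tau' u k; auto; try lra. intros t Ht; split; [apply Hu|apply Hg]; lra. }
    rewrite H. rewrite <- Rabs_Ropp. replace (- (Qf n z lam tau a - Qf n z lam tau (a + h))) with (Qf n z lam tau (a + h) - Qf n z lam tau a) by ring.
    replace h with (Rabs ((a + h) - a)) at 2 by (rewrite Rabs_right; lra). apply HQ; lra.
  - assert (Qf n z lam tau (b - h) = Qf n z lam tau a).
    { apply Q_const with L tau' u k; auto; try lra. intros t Ht; split; [apply Hu|apply Hg]; lra. }
    rewrite <- H.
    replace h with (Rabs ((b - h) - b)) at 2 by (rewrite Rabs_left1; lra). apply HQ; lra.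
Qed.

Lemma Q_zero n z lam (tau : R -> vec) t : Qf n z lam tau t = 0 -> dot n lam (tau t) * dot n lam (tau t) < 1 ->
  dot n z (tau t) = 0.
Proof.
  unfold Qf. intros H Hg. 
  assert (dot n z (tau t) * dot n z (tau t) = 0).
  { replace (dot n z (tau t) * dot n z (tau t)) with
      ((dot n z (tau t) * dot n z (tau t)) / (1 - dot n lam (tau t) * dot n lam (tau t)) * (1 - dot n lam (tau t) * dot n lam (tau t))) by (field; lra).
    rewrite H; ring. }
  apply Rmult_integral in H0; tauto.
Qed.

Lemma Q_of_zero n z lam (tau : R -> vec) t : dot n z (tau t) = 0 -> Qf n z lam tau t = 0.
Proof. unfold Qf. intros H; rewrite H. unfold Rdiv; ring. Qed.

Lemma lip_gg n L (tau : R -> vec) lam : 0 <= L -> (forall i, (i < n)%nat -> lipon 0 L (fun t => tau t i)) ->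
  lipon 0 L (fun t => dot n lam (tau t) * dot n lam (tau t)).
Proof. intros. apply (lip_mult 0 L (fun t => dot n lam (tau t)) (fun t => dot n lam (tau t))); auto; apply lip_tau_dot with L; auto; lra. Qed.

Lemma near_pos L f s : lipon 0 L f -> 0 <= s <= L -> 0 < f s ->
  exists d, 0 < d /\ forall t, 0 <= t <= L -> Rabs (t - s) < d -> 0 < f t.
Proof.
  intros Hl Hs Hf. destruct (lip_cont 0 L f s Hl (f s / 2) ltac:(lra)) as [d [Hd H]].
  exists d; split; auto. intros t Ht Hts. specialize (H t Hs Ht Hts). apply abs_lt in H. lra.
Qed.

Lemma u_near n L (u : R -> vec) k s : 0 < k -> 0 <= L -> (forall i, (i < n)%nat -> lipon 0 L (fun t => u t i)) ->
  0 <= s <= L -> 0 < k * vnorm n (u s) ->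
  exists d, 0 < d /\ forall t, 0 <= t <= L -> Rabs (t - s) < d -> 0 < k * vnorm n (u t).
Proof.
  intros Hk HL Hl Hs Hu.
  assert (Hv : 0 < vnorm n (u s)) by (apply Rmult_lt_reg_l with k; lra).
  destruct (near_pos L (fun t => dot n (u t) (u t)) s) as [d [Hd H]]; auto.
  apply lip_dot; auto. rewrite <- vnorm_sq. nra.
  exists d; split; auto. intros t Ht Hts. apply Rmult_lt_0_compat; auto.
  unfold vnorm. apply sqrt_lt_R0. apply H; auto.
Qed.

Lemma locAC n L (tau tau' u u' : R -> vec) beta lam k b0 s :
  0 < L -> (forall t, 0 <= t <= L -> dot n (tau t) (tau t) = 1) -> dot n lam lam = 1 -> 0 < k ->
  0 < b0 -> (forall t, 0 <= t <= L -> b0 <= beta t) ->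
  (forall i, (i < n)%nat -> lipon 0 L (fun t => tau t i)) ->
  (forall i, (i < n)%nat -> lipon 0 L (fun t => u t i)) ->
  ae_on 0 L (Gd n tau tau' u u' beta lam k) ->
  ae_on 0 L (fun t => forall i, (i < n)%nat -> derivable_pt_lim (fun s => tau s i) t (tau' t i)) ->
  (forall t, (0 <= t <= L /\ 0 < k * vnorm n (u t)) -> lin_dep3 n (tau t) (tau' t) lam) ->
  0 <= s <= L -> dot n lam (tau s) * dot n lam (tau s) < 1 ->
  exists d, 0 < d /\ forall z, dot n z lam = 0 -> dot n z (tau s) = 0 ->
    forall t, 0 <= t <= L -> Rabs (t - s) < d -> dot n z (tau t) = 0.
Proof.
  intros HL Hs Hlam Hk Hb0 Hb Hlt Hlu Hae Haet Hdep Hs0 Hgs.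
  assert (Hd1 : exists d1, 0 < d1 /\ forall t, 0 <= t <= L -> 0 < Rabs (t - s) < d1 -> 0 < k * vnorm n (u t)).
  { destruct (Rlt_or_le 0 (k * vnorm n (u s))) as [Hu | Hu].
    - destruct (u_near n L u k s) as [d [Hd H]]; auto; try lra. exists d; split; auto. intros t Ht Hts; apply H; auto; lra.
    - apply typeC with tau tau' u' beta lam b0; auto.
      apply vnorm_zero. pose proof (vnorm_nonneg n (u s)). 
      assert (k * vnorm n (u s) >= 0) by nra. nra. }
  destruct Hd1 as [d1 [Hd1 Hu1]].
  destruct (near_pos L (fun t => 1 - dot n lam (tau t) * dot n lam (tau t)) s) as [d2 [Hd2 Hg2]]; auto.
  apply lip_minus. apply lip_const. apply lip_gg; [lra|auto]. lra.
  exists (Rmin d1 d2). split. apply Rmin_pos; auto. pose proof (Rmin_l d1 d2). pose proof (Rmin_r d1 d2).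
  intros z Hz Hzs t Ht Hts. apply abs_lt in Hts.
  assert (HQs : Qf n z lam tau s = 0) by (apply Q_of_zero; auto).
  assert (Hgt : forall r, 0 <= r <= L -> Rabs (r - s) < d2 -> dot n lam (tau r) * dot n lam (tau r) < 1)
    by (intros r Hr Hrs; specialize (Hg2 r Hr Hrs); simpl in Hg2; lra).
  destruct (Rtotal_order s t) as [Hst | [Hst | Hst]].
  - apply (Q_zero n z lam). rewrite <- HQs. symmetry. apply side_const with L tau' u k true; auto; try lra.
    intros r Hr. apply Hgt; [lra|]. apply abs_intro_lt; lra.
    intros r Hr Hr2. apply Hu1. lra. split; [apply Rabs_pos_lt; lra| apply abs_intro_lt; lra].
    apply Hgt; auto. apply abs_intro_lt; lra.
  - subst; auto.
  - apply (Q_zero n z lam). rewrite <- HQs. apply side_const with L tau' u k false; auto; try lra.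
    intros r Hr. apply Hgt; [lra|]. apply abs_intro_lt; lra.
    intros r Hr Hr2. apply Hu1. lra. split; [apply Rabs_pos_lt; lra| apply abs_intro_lt; lra].
    apply Hgt; auto. apply abs_intro_lt; lra.
Qed.

Lemma unif n (P : nat -> R -> Prop) : (forall i, (i < n)%nat -> exists d, 0 < d /\ P i d) ->
  (forall i d d', 0 < d' <= d -> P i d -> P i d') -> exists d, 0 < d /\ forall i, (i < n)%nat -> P i d.
Proof.
  intros H Hm. induction n.
  - exists 1; split; [lra| intros; lia].
  - destruct IHn as [d1 [Hd1 H1]]. intros; apply H; lia.
    destruct (H n ltac:(lia)) as [d2 [Hd2 H2]].
    exists (Rmin d1 d2). split. apply Rmin_pos; auto.
    pose proof (Rmin_l d1 d2). pose proof (Rmin_r d1 d2). assert (0 < Rmin d1 d2) by (apply Rmin_pos; auto).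
    intros i Hi. destruct (Nat.eq_dec i n). subst. apply Hm with d2; auto; lra.
    apply Hm with d1. lra. apply H1; lia.
Qed.

Lemma LB1 n L (tau tau' : R -> vec) s :
  (forall i, (i < n)%nat -> lipon 0 L (fun t => tau t i)) ->
  ae_on 0 L (fun t => forall i, (i < n)%nat -> derivable_pt_lim (fun s => tau s i) t (tau' t i)) ->
  0 <= s <= L -> vcont_within n 0 L tau' s ->
  forall e, 0 < e -> exists d, 0 < d /\ forall t, 0 <= t <= L -> Rabs (t - s) < d ->
    forall i, (i < n)%nat -> Rabs (tau t i - tau s i - (t - s) * tau' s i) <= e * Rabs (t - s).
Proof.
  intros Hl Hae Hs Hc e He.
  destruct (unif n (fun i d => forall t, 0 <= t <= L -> Rabs (t - s) < d -> Rabs (tau' t i - tau' s i) < e)) as [d [Hd H]].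
  - intros i Hi. destruct (Hc i Hi e He) as [d [Hd H]]. exists d; split; auto.
  - intros i d d' Hd' H t Ht Hts. apply H; auto; lra.
  - exists d; split; auto. intros t Ht Hts i Hi.
    assert (Hgood : forall x, Rmin s t < x < Rmax s t -> ~ (0 < x < L /\ ~ (forall i, (i < n)%nat -> derivable_pt_lim (fun s => tau s i) x (tau' x i))) ->
         exists l, derivable_pt_lim (fun r => tau r i) x l /\ Rabs (l - tau' s i) <= e).
    { intros x Hx Nx. 
      assert (Hx2 : 0 < x < L) by (unfold Rmin, Rmax in Hx; destruct Rle_dec; lra).
      exists (tau' x i). split.
      assert (Hall : forall i, (i < n)%nat -> derivable_pt_lim (fun s => tau s i) x (tau' x i)) by (apply NNPP; intro Hn; apply Nx; split; auto).
      apply Hall; auto.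
      left. apply H; auto. lra. apply abs_lt in Hts. apply abs_intro_lt. unfold Rmin, Rmax in Hx; destruct Rle_dec; lra. }
    destruct (Rtotal_order s t) as [Hst | [Hst | Hst]].
    + assert (Hm := mvi_abs (fun r => tau r i) s t (tau' s i) e _ Hst Hae).
      rewrite (Rabs_right (t - s)) by lra. rewrite (Rmult_comm (t - s)). apply Hm.
      apply lipon_sub with 0 L; auto; lra. intros x Hx Nx; apply Hgood; auto. unfold Rmin, Rmax; destruct Rle_dec; lra.
    + subst t. replace (s - s) with 0 by ring. rewrite Rabs_R0. replace (tau s i - tau s i - 0 * tau' s i) with 0 by ring. rewrite Rabs_R0; lra.
    + assert (Hm := mvi_abs (fun r => tau r i) t s (tau' s i) e _ Hst Hae).
      rewrite (Rabs_left1 (t - s)) by lra. rewrite <- Rabs_Ropp.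
      replace (- (tau t i - tau s i - (t - s) * tau' s i)) with (tau s i - tau t i - tau' s i * (s - t)) by ring.
      replace (e * - (t - s)) with (e * (s - t)) by ring. apply Hm.
      apply lipon_sub with 0 L; auto; lra. intros x Hx Nx; apply Hgood; auto. unfold Rmin, Rmax; destruct Rle_dec; lra.
Qed.

Lemma rsum_const N c : rsum N (fun _ => c) = c * INR N.
Proof. induction N; simpl rsum. simpl; ring. rewrite IHN, S_INR; ring. Qed.

Lemma N1_close n (y y' : vec) h : (forall i, (i < n)%nat -> Rabs (y i - y' i) <= h) -> N1 n y <= N1 n y' + h * INR n.
Proof.
  intros H. unfold N1. rewrite <- rsum_const, <- rsum_plus. apply rsum_le. intros i Hi.
  specialize (H i Hi). pose proof (Rabs_triang (y i - y' i) (y' i)). replace (y i - y' i + y' i) with (y i) in H0 by ring. lra.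
Qed.

Lemma dot_close n (x x' y y' : vec) h : (forall i, (i < n)%nat -> Rabs (x i - x' i) <= h) ->
  (forall i, (i < n)%nat -> Rabs (y i - y' i) <= h) ->
  Rabs (dot n x y - dot n x' y') <= h * (N1 n y + N1 n x').
Proof.
  intros Hx Hy.
  assert (E : dot n x y - dot n x' y' = dot n y (fun i => 1 * x i + (-1) * x' i) + dot n x' (fun i => 1 * y i + (-1) * y' i)).
  { rewrite !dot_lin_r. rewrite (dot_sym n y x), (dot_sym n y x'). ring. }
  rewrite E. eapply Rle_trans. apply Rabs_triang.
  assert (Rabs (dot n y (fun i => 1 * x i + -1 * x' i)) <= h * N1 n y) by (apply dot_bound; intros i Hi; replace (1 * x i + -1 * x' i) with (x i - x' i) by ring; auto).
  assert (Rabs (dot n x' (fun i => 1 * y i + -1 * y' i)) <= h * N1 n x') by (apply dot_bound; intros i Hi; replace (1 * y i + -1 * y' i) with (y i - y' i) by ring; auto).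
  lra.
Qed.

Lemma dot3 n (x y z : vec) a b c :
  dot n (fun i => a * x i + b * y i + c * z i) (fun i => a * x i + b * y i + c * z i) =
  a*a*dot n x x + b*b*dot n y y + c*c*dot n z z + 2*a*b*dot n x y + 2*a*c*dot n x z + 2*b*c*dot n y z.
Proof. unfold dot. induction n; simpl; [ring|]. rewrite IHn. ring. Qed.

Lemma dot3r n (w x y z : vec) a b c :
  dot n w (fun i => a * x i + b * y i + c * z i) = a * dot n w x + b * dot n w y + c * dot n w z.
Proof. unfold dot. induction n; simpl; [ring|]. rewrite IHn. ring. Qed.

Lemma N1_unit n (x : vec) : dot n x x = 1 -> N1 n x <= INR n.
Proof. intros H. unfold N1. rewrite <- (Rmult_1_l (INR n)), <- rsum_const. apply rsum_le. intros; apply (unit_comp n); auto. Qed.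

Lemma LB2 n L (tau tau' u u' : R -> vec) beta lam k s gs :
  0 < L -> (forall t, 0 <= t <= L -> dot n (tau t) (tau t) = 1) -> 0 < k ->
  (forall i, (i < n)%nat -> lipon 0 L (fun t => tau t i)) ->
  (forall i, (i < n)%nat -> lipon 0 L (fun t => u t i)) ->
  ae_on 0 L (Gd n tau tau' u u' beta lam k) ->
  0 <= s <= L -> vcont_within n 0 L tau' s -> 0 < k * vnorm n (u s) ->
  (forall i, (i < n)%nat -> tau s i = gs * lam i) -> gs * gs = 1 ->
  dot n (tau' s) lam = 0 /\ dot n (tau' s) (tau' s) = k * k.
Proof.
  intros HL Hs Hk Hlt Hlu Hae Hs0 Hc Hus Hts Hgs.
  set (w := tau' s).
  destruct (u_near n L u k s) as [du [Hdu Hu]]; auto; try lra.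
  assert (Happ : forall h, 0 < h < 1 -> Rabs (dot n w (tau s)) <= (INR n + N1 n w) * h /\
                                      Rabs (k * k - dot n w w) <= (2 * N1 n w + INR n) * h).
  { intros h Hh.
    destruct (unif n (fun i d => forall t, 0 <= t <= L -> Rabs (t - s) < d -> Rabs (tau' t i - tau' s i) < h)) as [d1 [Hd1 H1]].
    { intros i Hi. destruct (Hc i Hi h ltac:(lra)) as [d [Hd H]]. exists d; split; auto. }
    { intros i d d' Hd' H t Ht Htt. apply H; auto; lra. }
    destruct (unif n (fun i d => forall t, 0 <= t <= L -> Rabs (t - s) < d -> Rabs (tau t i - tau s i) < h)) as [d2 [Hd2 H2]].
    { intros i Hi. destruct (lip_cont 0 L _ s (Hlt i Hi) h ltac:(lra)) as [d [Hd H]]. exists d; split; auto. }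
    { intros i d d' Hd' H t Ht Htt. apply H; auto; lra. }
    set (d := Rmin du (Rmin d1 d2)).
    assert (Hd : 0 < d) by (unfold d; repeat apply Rmin_pos; auto).
    assert (d <= du) by apply Rmin_l. assert (d <= d1) by (unfold d; eapply Rle_trans; [apply Rmin_r | apply Rmin_l]).
    assert (d <= d2) by (unfold d; eapply Rle_trans; [apply Rmin_r | apply Rmin_r]).
    destruct (ae_exists 0 L _ (Rmax 0 (s - d/2)) (Rmin L (s + d/2)) Hae) as [t [Ht Hgt]].
    apply Rmax_l. unfold Rmax, Rmin; repeat destruct Rle_dec; lra. apply Rmin_l.
    assert (Ht2 : 0 < t < L /\ Rabs (t - s) < d).
    { split. unfold Rmax, Rmin in Ht; repeat destruct Rle_dec; lra. apply abs_intro_lt. unfold Rmax, Rmin in Ht; repeat destruct Rle_dec; lra. }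
    destruct Ht2 as [Ht2 Htsd].
    destruct Hgt as [Hdt [_ [_ Hpar]]].
    assert (Hperp := tau_perp n L tau tau' t Hs Ht2 Hdt).
    assert (Hnorm := par_norm n (u t) (tau' t) k Hpar ltac:(specialize (Hu t ltac:(lra) ltac:(lra)); apply Rmult_lt_reg_l with k; lra)).
    assert (Hc1 : forall i, (i < n)%nat -> Rabs (tau' t i - w i) <= h) by (intros i Hi; left; apply H1; auto; lra).
    assert (Hc2 : forall i, (i < n)%nat -> Rabs (tau t i - tau s i) <= h) by (intros i Hi; left; apply H2; auto; lra).
    split.
    - assert (Hd3 := dot_close n (tau' t) w (tau t) (tau s) h Hc1 Hc2).
      rewrite (dot_sym n (tau' t)), Hperp in Hd3. rewrite Rminus_0_l, Rabs_Ropp in Hd3.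
      pose proof (N1_unit n (tau t) ltac:(apply Hs; lra)).
      assert (h * (N1 n (tau t) + N1 n w) <= h * (INR n + N1 n w)) by (apply Rmult_le_compat_l; lra). lra.
    - assert (Hd3 := dot_close n (tau' t) w (tau' t) w h Hc1 Hc1).
      rewrite Hnorm in Hd3. pose proof (N1_close n (tau' t) w h Hc1). pose proof (N1_nonneg n w).
      pose proof (pos_INR n).
      assert (h * (N1 n (tau' t) + N1 n w) <= h * (2 * N1 n w + INR n)).
      { apply Rmult_le_compat_l. lra. assert (h * INR n <= INR n) by nra. lra. }
      lra. }
  assert (Hw1 : dot n w (tau s) = 0).
  { apply small_zero with (INR n + N1 n w) 1. lra. pose proof (pos_INR n); pose proof (N1_nonneg n w); lra.
    intros h Hh; apply Happ; auto. }
  assert (Hw2 : k * k - dot n w w = 0).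
  { apply small_zero with (2 * N1 n w + INR n) 1. lra. pose proof (pos_INR n); pose proof (N1_nonneg n w); lra.
    intros h Hh; apply Happ; auto. }
  split; [|lra].
  rewrite (dot_ext n w (tau s) w (fun i => gs * lam i)) in Hw1; auto. rewrite dot_scal_r in Hw1.
  apply Rmult_integral in Hw1. destruct Hw1; auto. subst gs; lra.
Qed.

Lemma pick_side s t D : 0 < Rabs (t - s) -> 0 < D -> exists t1, Rmin s t <= t1 <= Rmax s t /\
  0 < Rabs (t1 - s) < D /\ Rabs (t1 - s) <= Rabs (t - s) /\ 0 < (t1 - s) * (t - s).
Proof.
  intros Ht HD. set (th := Rmin (1/2) (D / (2 * Rabs (t - s)))).
  assert (Hth : 0 < th) by (unfold th; apply Rmin_pos; [lra | apply Rdiv_lt_0_compat; lra]).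
  assert (Hth1 : th <= 1/2) by apply Rmin_l. assert (Hth2 : th <= D / (2 * Rabs (t - s))) by apply Rmin_r.
  exists (s + (t - s) * th).
  replace (s + (t - s) * th - s) with ((t - s) * th) by ring.
  rewrite Rabs_mult, (Rabs_right th) by lra.
  assert (Rabs (t - s) * th <= D / 2).
  { apply Rle_trans with (Rabs (t - s) * (D / (2 * Rabs (t - s)))). apply Rmult_le_compat_l; [lra|auto].
    right; field; lra. }
  assert (0 < (t - s) * (t - s)).
  { destruct (Rlt_or_le 0 (t - s)). nra. rewrite Rabs_left1 in Ht by lra. nra. }
  repeat split.
  - unfold Rmin, Rmax; destruct Rle_dec; nra.
  - unfold Rmin, Rmax; destruct Rle_dec; nra.
  - nra.
  - lra.
  - nra.
  - nra.
Qed.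

Lemma gap_unit n (x y : vec) : dot n x x = 1 -> dot n y y = 1 ->
  dot n (fun i => 1 * x i + (- dot n y x) * y i + 0 * y i) (fun i => 1 * x i + (- dot n y x) * y i + 0 * y i)
  = 1 - dot n y x * dot n y x.
Proof. intros Hx Hy. rewrite dot3, Hx, Hy, (dot_sym n x y). ring. Qed.

Lemma g_le1 n (x y : vec) : dot n x x = 1 -> dot n y y = 1 -> dot n y x * dot n y x <= 1.
Proof. intros Hx Hy. pose proof (gap_unit n x y Hx Hy). pose proof (dot_nonneg n (fun i => 1 * x i + (- dot n y x) * y i + 0 * y i)). lra. Qed.

Lemma g_eq1 n (x y : vec) : dot n x x = 1 -> dot n y y = 1 -> dot n y x * dot n y x = 1 ->
  forall i, (i < n)%nat -> x i = dot n y x * y i.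
Proof.
  intros Hx Hy Hg i Hi. pose proof (gap_unit n x y Hx Hy). rewrite Hg, Rminus_diag in H.
  apply dot_eq0 in H. specialize (H i Hi). simpl in H. lra.
Qed.

Lemma locB n L (tau tau' u u' : R -> vec) beta lam k s :
  0 < L -> (forall t, 0 <= t <= L -> dot n (tau t) (tau t) = 1) -> dot n lam lam = 1 -> 0 < k ->
  (forall i, (i < n)%nat -> lipon 0 L (fun t => tau t i)) ->
  (forall i, (i < n)%nat -> lipon 0 L (fun t => u t i)) ->
  ae_on 0 L (Gd n tau tau' u u' beta lam k) ->
  ae_on 0 L (fun t => forall i, (i < n)%nat -> derivable_pt_lim (fun s => tau s i) t (tau' t i)) ->
  (forall t, (0 <= t <= L /\ 0 < k * vnorm n (u t)) -> lin_dep3 n (tau t) (tau' t) lam) ->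
  0 <= s <= L -> vcont_within n 0 L tau' s -> 0 < k * vnorm n (u s) ->
  dot n lam (tau s) * dot n lam (tau s) = 1 ->
  exists d, 0 < d /\ forall z, dot n z lam = 0 ->
    (exists t0, 0 <= t0 <= L /\ 0 < Rabs (t0 - s) < d /\ dot n z (tau t0) = 0) ->
    forall t, 0 <= t <= L -> 0 < Rabs (t - s) < d -> dot n z (tau t) = 0.
Proof.
  intros HL Hs Hlam Hk Hlt Hlu Hae Haet Hdep Hs0 Hc Hus Hgs1.
  set (gs := dot n lam (tau s)) in *.
  assert (Hts : forall i, (i < n)%nat -> tau s i = gs * lam i) by (apply g_eq1; auto; apply Hs; lra).
  destruct (LB2 n L tau tau' u u' beta lam k s gs) as [Hwl Hww]; auto.
  set (w := tau' s) in *.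
  rewrite dot_sym in Hwl.
  set (e0 := Rmin 1 (k * k / (2 * (2 * N1 n w + N1 n lam * N1 n lam + 1)))).
  pose proof (N1_nonneg n w) as HNw. pose proof (N1_nonneg n lam) as HNl.
  assert (He0 : 0 < e0) by (unfold e0; apply Rmin_pos; [lra| apply Rdiv_lt_0_compat; nra]).
  assert (He01 : e0 <= 1) by apply Rmin_l.
  assert (He02 : e0 * (2 * N1 n w + N1 n lam * N1 n lam + 1) <= k * k / 2).
  { apply Rle_trans with (k * k / (2 * (2 * N1 n w + N1 n lam * N1 n lam + 1)) * (2 * N1 n w + N1 n lam * N1 n lam + 1)).
    apply Rmult_le_compat_r. nra. apply Rmin_r. right; field. nra. }
  assert (Hexp : forall e, 0 < e -> exists d, 0 < d /\ forall t, 0 <= t <= L -> Rabs (t - s) < d ->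
     forall i, (i < n)%nat -> Rabs (tau t i - gs * lam i - (t - s) * w i) <= e * Rabs (t - s)).
  { intros e He. destruct (LB1 n L tau tau' s Hlt Haet Hs0 Hc e He) as [d [Hd H]].
    exists d; split; auto. intros t Ht Hts2 i Hi. rewrite <- Hts; auto. }
  assert (Hdec : forall t e, 0 <= t <= L -> (forall i, (i < n)%nat -> Rabs (tau t i - gs * lam i - (t - s) * w i) <= e * Rabs (t - s)) ->
      forall z, dot n z lam = 0 -> Rabs (dot n z (tau t) - (t - s) * dot n z w) <= e * Rabs (t - s) * N1 n z).
  { intros t e Ht HE z Hz.
    set (E := fun i => tau t i - gs * lam i - (t - s) * w i).
    rewrite (dot_ext n z (tau t) z (fun i => gs * lam i + (t - s) * w i + 1 * E i)); auto.
    rewrite dot3r, Hz. replace (gs * 0 + (t - s) * dot n z w + 1 * dot n z E - (t - s) * dot n z w) with (dot n z E) by ring.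
    apply dot_bound. auto. intros i Hi; unfold E; ring. }
  assert (Hgap : forall t e, 0 < e <= e0 -> 0 <= t <= L -> (forall i, (i < n)%nat -> Rabs (tau t i - gs * lam i - (t - s) * w i) <= e * Rabs (t - s)) ->
      (t - s) * (t - s) * (k * k) / 2 <= 1 - dot n lam (tau t) * dot n lam (tau t)).
  { intros t e He Ht HE.
    set (h := t - s) in *.
    set (E := fun i => tau t i - gs * lam i - h * w i).
    assert (HX : forall i, (i < n)%nat -> tau t i = gs * lam i + h * w i + 1 * E i) by (intros; unfold E; ring).
    assert (H1 : dot n (tau t) (tau t) = 1) by (apply Hs; auto).
    rewrite (dot_ext n (tau t) (tau t) (fun i => gs * lam i + h * w i + 1 * E i) (fun i => gs * lam i + h * w i + 1 * E i)) in H1; auto.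
    rewrite dot3, Hlam, Hww, Hwl in H1.
    rewrite (dot_ext n lam (tau t) lam (fun i => gs * lam i + h * w i + 1 * E i)); auto.
    rewrite dot3r, Hlam, Hwl.
    assert (HwE : Rabs (dot n w E) <= e * Rabs h * N1 n w) by (apply dot_bound; auto).
    assert (HlE : Rabs (dot n lam E) <= e * Rabs h * N1 n lam) by (apply dot_bound; auto).
    pose proof (dot_nonneg n E).
    assert (Hhh : Rabs h * Rabs h = h * h) by (rewrite <- Rabs_mult; apply Rabs_right; nra).
    assert (Hhw : - (Rabs h * Rabs (dot n w E)) <= h * dot n w E).
    { rewrite <- Rabs_mult. pose proof (Rle_abs (- (h * dot n w E))). rewrite Rabs_Ropp in H0. lra. }
    assert (Hhw2 : Rabs h * Rabs (dot n w E) <= Rabs h * (e * Rabs h * N1 n w)) by (apply Rmult_le_compat_l; auto; apply Rabs_pos).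
    apply abs_le in HlE.
    assert (HlE2 : dot n lam E * dot n lam E <= (e * Rabs h * N1 n lam) * (e * Rabs h * N1 n lam)) by nra.
    assert (HlE3 : (e * Rabs h * N1 n lam) * (e * Rabs h * N1 n lam) <= e * (h * h) * (N1 n lam * N1 n lam)).
    { replace ((e * Rabs h * N1 n lam) * (e * Rabs h * N1 n lam)) with (e * e * (Rabs h * Rabs h) * (N1 n lam * N1 n lam)) by ring.
      rewrite Hhh. assert (0 <= h * h) by nra. assert (0 <= N1 n lam * N1 n lam) by nra.
      apply Rmult_le_compat_r; auto. apply Rmult_le_compat_r; auto. nra. }
    assert (Hk2 : e * (2 * N1 n w + N1 n lam * N1 n lam) <= k * k / 2).
    { apply Rle_trans with (e0 * (2 * N1 n w + N1 n lam * N1 n lam + 1)); auto. 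
      apply Rle_trans with (e0 * (2 * N1 n w + N1 n lam * N1 n lam)). apply Rmult_le_compat_r; nra. nra. }
    assert (Hhe : Rabs h * (e * Rabs h * N1 n w) = e * (h * h) * N1 n w) by (rewrite <- Hhh; ring).
    assert (0 <= h * h) by nra.
    assert (h * h * (e * (2 * N1 n w + N1 n lam * N1 n lam)) <= h * h * (k * k / 2)) by (apply Rmult_le_compat_l; auto).
    assert (Hgs2 : gs * gs = 1) by auto.
    nra. }
  destruct (u_near n L u k s) as [du [Hdu Hu]]; auto; try lra.
  destruct (Hexp e0 He0) as [d0 [Hd0 Hd0']].
  set (d := Rmin du d0). assert (Hd : 0 < d) by (apply Rmin_pos; auto).
  assert (d <= du) by apply Rmin_l. assert (d <= d0) by apply Rmin_r.
  assert (HtA : forall t, 0 <= t <= L -> 0 < Rabs (t - s) < d ->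
     0 < k * vnorm n (u t) /\ dot n lam (tau t) * dot n lam (tau t) < 1).
  { intros t Ht Hts2. split. apply Hu; auto; lra.
    assert (Hg := Hgap t e0 ltac:(lra) Ht (Hd0' t Ht ltac:(lra))).
    assert (0 < (t - s) * (t - s)).
    { destruct (Rlt_or_le 0 (t - s)). nra. rewrite Rabs_left1 in Hts2 by lra. nra. }
    assert (0 < (t - s) * (t - s) * (k * k)) by (apply Rmult_lt_0_compat; nra). lra. }
  assert (Hbetw : forall t t' r, 0 < (t - s) * (t' - s) -> t <= r <= t' -> 0 < Rabs (t - s) < d -> 0 < Rabs (t' - s) < d ->
     0 < Rabs (r - s) < d).
  { intros t t' r Hp Hr H1 H2. destruct (Rlt_or_le 0 (t - s)).
    - assert (0 < t' - s) by nra. rewrite Rabs_right in H1, H2 |- * by lra. lra.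
    - assert (t - s < 0) by (destruct H3; auto; rewrite H3 in Hp; lra). assert (t' - s < 0) by nra.
      rewrite Rabs_left in H1, H2 |- * by lra. lra. }
  assert (Hsame : forall z t t', dot n z lam = 0 -> 0 <= t <= L -> 0 <= t' <= L -> 0 < Rabs (t - s) < d -> 0 < Rabs (t' - s) < d ->
     0 < (t - s) * (t' - s) -> Qf n z lam tau t = Qf n z lam tau t').
  { intros z t t' Hz Ht Ht' H1 H2 Hp. destruct (Rtotal_order t t') as [Htt | [Htt | Htt]].
    - apply side_const with L tau' u k true; auto; try lra.
      intros r Hr. apply HtA. lra. apply (Hbetw t t'); auto.
      intros r Hr _. apply HtA. lra. apply (Hbetw t t'); auto.
    - subst; auto.
    - symmetry. apply side_const with L tau' u k true; auto; try lra.
      intros r Hr. apply HtA. lra. apply (Hbetw t' t); auto; lra.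
      intros r Hr _. apply HtA. lra. apply (Hbetw t' t); auto; lra. }
  exists d. split; auto. intros z Hz [t0 [Ht0 [Ht0s Hzt0]]] t Ht Hts2.
  pose proof (N1_nonneg n z) as HNz.
  assert (Hzw : dot n z w = 0).
  { apply small_zero with (N1 n z) 1; auto. lra. intros e He.
    destruct (Hexp e ltac:(lra)) as [de [Hde Hde']].
    destruct (pick_side s t0 (Rmin de d)) as [t1 [Ht1 [Ht1s [Ht1s2 Ht1p]]]]. lra. apply Rmin_pos; auto.
    pose proof (Rmin_l de d). pose proof (Rmin_r de d).
    assert (Ht1L : 0 <= t1 <= L) by (unfold Rmin, Rmax in Ht1; destruct Rle_dec; lra).
    assert (Hz1 : dot n z (tau t1) = 0).
    { apply (Q_zero n z lam). rewrite (Hsame z t1 t0 Hz Ht1L Ht0 ltac:(lra) Ht0s Ht1p). apply Q_of_zero; auto.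
      exact (proj2 (HtA t1 Ht1L ltac:(lra))). }
    assert (Hd1 := Hdec t1 e Ht1L (Hde' t1 Ht1L ltac:(lra)) z Hz).
    rewrite Hz1, Rminus_0_l, Rabs_Ropp, Rabs_mult in Hd1.
    apply Rmult_le_reg_l with (Rabs (t1 - s)). lra. nra. }
  assert (HQ : Qf n z lam tau t = 0).
  { apply small_zero with (2 * (N1 n z * N1 n z) / (k * k)) 1. lra.
    apply Rmult_le_pos. nra. left; apply Rinv_0_lt_compat; nra.
    intros e He.
    set (e' := Rmin e e0). assert (He' : 0 < e') by (apply Rmin_pos; lra).
    assert (e' <= e) by apply Rmin_l. assert (e' <= e0) by apply Rmin_r.
    destruct (Hexp e' He') as [de [Hde Hde']].
    destruct (pick_side s t (Rmin de d)) as [t1 [Ht1 [Ht1s [Ht1s2 Ht1p]]]]. lra. apply Rmin_pos; auto.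
    pose proof (Rmin_l de d). pose proof (Rmin_r de d).
    assert (Ht1L : 0 <= t1 <= L) by (unfold Rmin, Rmax in Ht1; destruct Rle_dec; lra).
    rewrite (Hsame z t t1 Hz Ht Ht1L Hts2 ltac:(lra) ltac:(nra)).
    assert (HE := Hde' t1 Ht1L ltac:(lra)).
    assert (Hd1 := Hdec t1 e' Ht1L HE z Hz). rewrite Hzw, Rmult_0_r, Rminus_0_r in Hd1.
    assert (Hg := Hgap t1 e' ltac:(lra) Ht1L HE).
    assert (HA := HtA t1 Ht1L ltac:(lra)). destruct HA as [_ HA].
    set (h := t1 - s) in *. set (X := dot n z (tau t1)) in *. set (D := 1 - dot n lam (tau t1) * dot n lam (tau t1)) in *.
    assert (Hhh : Rabs h * Rabs h = h * h) by (rewrite <- Rabs_mult; apply Rabs_right; nra).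
    assert (Hh2 : 0 < h * h) by (rewrite <- Hhh; nra).
    assert (HD : 0 < D) by (unfold D; lra).
    assert (HQ1 : Qf n z lam tau t1 = X * X / D) by auto.
    assert (HX2 : X * X <= e' * e' * (h * h) * (N1 n z * N1 n z)).
    { apply abs_le in Hd1. rewrite <- Hhh. assert (0 <= e' * Rabs h * N1 n z) by (apply Rmult_le_pos; [|lra]; apply Rmult_le_pos; [lra| apply Rabs_pos]). nra. }
    rewrite HQ1. rewrite Rabs_right by (apply Rle_ge; unfold Rdiv; apply Rmult_le_pos; [nra| left; apply Rinv_0_lt_compat; lra]).
    apply Rle_trans with (e' * e' * (h * h) * (N1 n z * N1 n z) / (h * h * (k * k) / 2)).
    { unfold Rdiv. apply Rmult_le_compat; auto. nra. left; apply Rinv_0_lt_compat; lra.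
      apply Rinv_le_contravar; auto. apply Rmult_lt_0_compat; [|lra]. apply Rmult_lt_0_compat; nra. }
    replace (e' * e' * (h * h) * (N1 n z * N1 n z) / (h * h * (k * k) / 2)) with (2 * (N1 n z * N1 n z) / (k * k) * (e' * e')) by (field; split; nra).
    apply Rmult_le_compat_l. apply Rmult_le_pos. nra. left; apply Rinv_0_lt_compat; nra. nra. }
  apply (Q_zero n z lam); auto. exact (proj2 (HtA t Ht Hts2)).
Qed.

Lemma prop_right (I G : R -> Prop) (t0 : R) : is_interval I -> I t0 -> G t0 ->
  (forall x, I x -> t0 < x -> (forall y, t0 <= y < x -> G y) -> G x) ->
  (forall x, I x -> t0 <= x -> (forall y, t0 <= y <= x -> G y) ->
     exists d, 0 < d /\ forall y, I y -> x <= y < x + d -> G y) ->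
  forall x, I x -> t0 <= x -> G x.
Proof.
  intros HI Ht0 HG0 Hcl Hext x1 Hx1 Htx1. apply NNPP; intro Hn.
  set (E := fun y => t0 <= y <= x1 /\ forall z, t0 <= z <= y -> G z).
  assert (HE : E t0). { split. lra. intros z Hz. replace z with t0 by lra. auto. }
  assert (Hb : bound E) by (exists x1; intros y [Hy _]; lra).
  destruct (completeness E Hb (ex_intro _ t0 HE)) as [S [HS1 HS2]].
  assert (t0 <= S) by (apply HS1; auto).
  assert (S <= x1) by (apply HS2; intros y [Hy _]; lra).
  assert (HIS : I S) by (apply (HI t0 x1); auto).
  assert (Hlt : forall y, t0 <= y < S -> G y).
  { intros y Hy. apply NNPP; intro Hny.
    assert (S <= y). { apply HS2. intros e [He1 He2]. apply Rnot_lt_le. intro. apply Hny. apply He2; lra. } lra. }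
  assert (HGS : G S). { destruct (Req_dec S t0). rewrite H1; auto. apply Hcl; auto. lra. }
  assert (Hle : forall y, t0 <= y <= S -> G y).
  { intros y Hy. destruct (Req_dec y S). subst; auto. apply Hlt; lra. }
  destruct (Hext S HIS ltac:(lra) Hle) as [d [Hd Hd2]].
  destruct (Rlt_or_le x1 (S + d)).
  - apply Hn. apply Hd2; auto; lra.
  - assert (E (S + d / 2)).
    { split. lra. intros z Hz. destruct (Rle_or_lt z S). apply Hle; lra.
      apply Hd2. apply (HI S x1); auto; lra. lra. }
    assert (S + d / 2 <= S) by (apply HS1; auto). lra.
Qed.

Lemma prop_left (I G : R -> Prop) (t0 : R) : is_interval I -> I t0 -> G t0 ->
  (forall x, I x -> x < t0 -> (forall y, x < y <= t0 -> G y) -> G x) ->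
  (forall x, I x -> x <= t0 -> (forall y, x <= y <= t0 -> G y) ->
     exists d, 0 < d /\ forall y, I y -> x - d < y <= x -> G y) ->
  forall x, I x -> x <= t0 -> G x.
Proof.
  intros HI Ht0 HG0 Hcl Hext x Hx Hxt.
  replace x with (- - x) by ring.
  apply (prop_right (fun y => I (- y)) (fun y => G (- y)) (- t0)).
  - intros a b c Ha Hb Hc. apply (HI (- b) (- a)); auto; lra.
  - rewrite Ropp_involutive; auto.
  - rewrite Ropp_involutive; auto.
  - intros y Hy Hty Hg. apply Hcl; auto. lra. intros y' Hy'. replace y' with (- - y') by ring. apply Hg; lra.
  - intros y Hy Hty Hg. destruct (Hext (- y) Hy ltac:(lra)) as [d [Hd H]].
    intros y' Hy'. replace y' with (- - y') by ring. apply Hg; lra.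
    exists d; split; auto. intros y' Hy' Hy2. apply H; auto. lra.
  - rewrite Ropp_involutive; auto.
  - lra.
Qed.

Definition basis (j : nat) : vec := fun i => if Nat.eq_dec i j then 1 else 0.

Lemma dot_basis n j x : (j < n)%nat -> dot n (basis j) x = x j.
Proof.
  unfold dot, basis. induction n; intros Hj; [lia|]. simpl.
  destruct (Nat.eq_dec n j).
  - subst. assert (Hz : rsum j (fun i => (if Nat.eq_dec i j then 1 else 0) * x i) = rsum j (fun _ => 0)).
    { apply rsum_ext. intros i Hi. destruct (Nat.eq_dec i j); [lia|ring]. }
    rewrite Hz, rsum_zero. destruct (Nat.eq_dec j j); [ring|lia].
  - rewrite IHn by lia. ring.
Qed.

Lemma normalize n (v lam : vec) : 0 < dot n v v -> dot n lam v = 0 ->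
  let mu := fun i => / sqrt (dot n v v) * v i in
  dot n mu mu = 1 /\ dot n lam mu = 0 /\ forall i, v i = sqrt (dot n v v) * mu i.
Proof.
  intros Hv Hl mu. assert (Hs : 0 < sqrt (dot n v v)) by (apply sqrt_lt_R0; auto).
  assert (Hss : sqrt (dot n v v) * sqrt (dot n v v) = dot n v v) by (apply sqrt_sqrt; lra).
  unfold mu. rewrite dot_scal_l, dot_scal_r, dot_scal_r, Hl. repeat split.
  - field_simplify. 2: lra. rewrite <- Hss at 1. field. lra.
  - ring.
  - intros i. field. lra.
Qed.

Lemma rsum_two N f i j : (i < N)%nat -> (j < N)%nat -> i <> j -> (forall l, (l < N)%nat -> 0 <= f l) ->
  f i + f j <= rsum N f.
Proof.
  induction N; intros Hi Hj Hij H; [lia|]. simpl.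
  destruct (Nat.eq_dec j N). subst. pose proof (rsum_term N f i ltac:(lia) ltac:(intros; apply H; lia)). lra.
  destruct (Nat.eq_dec i N). subst. pose proof (rsum_term N f j ltac:(lia) ltac:(intros; apply H; lia)). lra.
  pose proof (IHN ltac:(lia) ltac:(lia) Hij ltac:(intros; apply H; lia)). pose proof (H N ltac:(lia)). lra.
Qed.

Lemma exists_perp n (lam : vec) : (2 <= n)%nat -> dot n lam lam = 1 ->
  exists mu, dot n mu mu = 1 /\ dot n lam mu = 0.
Proof.
  intros Hn Hl.
  assert (Hj : exists j, (j < n)%nat /\ lam j * lam j < 1).
  { pose proof (rsum_two n (fun i => lam i * lam i) 0 1 ltac:(lia) ltac:(lia) ltac:(lia) ltac:(intros; nra)).
    fold (dot n lam lam) in H. 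
    destruct (Rlt_or_le (lam 0%nat * lam 0%nat) 1). exists 0%nat; split; auto; lia.
    exists 1%nat; split. lia. assert (lam 1%nat * lam 1%nat <= 0) by lra. lra. }
  destruct Hj as [j [Hjn Hj]].
  set (v := fun i => 1 * basis j i + (- lam j) * lam i + 0 * lam i).
  assert (Hvv : dot n v v = 1 - lam j * lam j).
  { unfold v. rewrite dot3, Hl, dot_basis, (dot_basis n j lam) by auto. unfold basis. destruct (Nat.eq_dec j j); [ring|lia]. }
  assert (Hlv : dot n lam v = 0).
  { unfold v. rewrite dot3r, Hl, (dot_sym n lam (basis j)), dot_basis by auto. ring. }
  destruct (normalize n v lam ltac:(lra) Hlv) as [H1 [H2 _]].
  eexists; split; eauto.
Qed.

Theorem mainTheorem16
  (n : nat) (L : R) (beta : R -> R) (tau tau' : R -> vec) (k : R)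
  (lam : vec) (u u' : R -> vec)
  (Hn : (2 <= n)%nat)
  (HL : 0 < L)
  (Hbeta_pos : forall t, 0 <= t <= L -> 0 < beta t)
  (Hbeta_bv : bounded_variation 0 L beta)
  (Hbeta_inv : exists C, forall t, 0 <= t <= L -> / beta t <= C)
  (Htau : W1inf n 0 L tau tau')
  (Htau_sphere : forall t, 0 <= t <= L -> dot n (tau t) (tau t) = 1)
  (Hk : is_ess_sup 0 L (fun t => vnorm n (tau' t)) k)
  (Hk_pos : 0 < k)
  (Hlam : dot n lam lam = 1)
  (Hu : W1inf n 0 L u u')
  (Hu_nz : exists t, 0 <= t <= L /\ ~ vzero n (u t))
  (Hode : ae_on 0 L (fun t =>
     veq n (fun i => u' t i + dot n (u t) (tau' t) * tau t i)
           (fun i => beta t * (lam i - dot n lam (tau t) * tau t i))))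
  (Hpar : ae_on 0 L (fun t =>
     veq n (fun i => vnorm n (u t) * tau' t i) (fun i => k * u t i)))
  (Hcont : forall t, (0 <= t <= L /\ 0 < k * vnorm n (u t)) ->
     vcont_within n 0 L tau' t)
  (Hdep : forall t, (0 <= t <= L /\ 0 < k * vnorm n (u t)) ->
     lin_dep3 n (tau t) (tau' t) lam) :
  forall I : R -> Prop,
    conn_component
      (fun t => (0 <= t <= L /\ ~ veq n (tau t) lam /\ ~ veq n (tau t) (vopp lam))
                \/ (0 <= t <= L /\ 0 < k * vnorm n (u t)))
      I ->
    in_great_circle_through n lam tau I.
Proof.
  intros I [_ [HIS [HIint _]]].
  assert (HL0 : 0 <= L) by lra.
  assert (Hlt := W1_lip n L tau tau' HL0 Htau).
  assert (Hlu := W1_lip n L u u' HL0 Hu).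
  assert (Haet := proj2 Htau).
  assert (Hae : ae_on 0 L (Gd n tau tau' u u' beta lam k)).
  { unfold Gd. apply ae_and; [exact (proj2 Htau)|]. apply ae_and; [exact (proj2 Hu)|]. apply ae_and; auto. }
  destruct Hbeta_inv as [C HC].
  assert (Hb : forall t, 0 <= t <= L -> / C <= beta t).
  { intros t Ht. specialize (HC t Ht). pose proof (Hbeta_pos t Ht).
    rewrite <- (Rinv_inv (beta t)). apply Rinv_le_contravar; auto. apply Rinv_0_lt_compat; auto. }
  assert (HC0 : 0 < / C).
  { specialize (HC 0 ltac:(lra)). pose proof (Hbeta_pos 0 ltac:(lra)). pose proof (Rinv_0_lt_compat _ H).
    apply Rinv_0_lt_compat; lra. }
  assert (HI01 : forall x, I x -> 0 <= x <= L) by (intros x Hx; destruct (HIS x Hx) as [[? _]|[? _]]; auto).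
  destruct (classic (exists ts, I ts /\ dot n lam (tau ts) * dot n lam (tau ts) < 1)) as [[ts [Hts Hgts]] | Hno].
  2: {
    destruct (exists_perp n lam Hn Hlam) as [mu [Hmu Hlmu]].
    exists mu. split; auto. split; auto. intros t Ht.
    assert (Hg1 : dot n lam (tau t) * dot n lam (tau t) = 1).
    { pose proof (g_le1 n (tau t) lam (Htau_sphere t (HI01 t Ht)) Hlam).
      destruct H; auto. exfalso; apply Hno; exists t; auto. }
    assert (He := g_eq1 n (tau t) lam (Htau_sphere t (HI01 t Ht)) Hlam Hg1).
    assert (Htm : dot n (tau t) mu = 0).
    { rewrite (dot_ext n (tau t) mu (fun i => dot n lam (tau t) * lam i) mu); auto.
      rewrite dot_scal_l, Hlmu; ring. }
    intros i Hi. rewrite Htm, (dot_sym n (tau t) lam). rewrite (He i Hi). ring. }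
  assert (Hts01 := HI01 ts Hts).
  set (gs := dot n lam (tau ts)) in *.
  set (v0 := fun i => tau ts i - gs * lam i).
  assert (Hvv : dot n v0 v0 = 1 - gs * gs).
  { pose proof (gap_unit n (tau ts) lam (Htau_sphere ts Hts01) Hlam) as Hgu. fold gs in Hgu.
    rewrite <- Hgu. apply dot_ext; intros; unfold v0; ring. }
  assert (Hlv : dot n lam v0 = 0).
  { rewrite (dot_ext n lam v0 lam (fun i => 1 * tau ts i + (- gs) * lam i)); auto.
    rewrite dot_lin_r, Hlam. fold gs. ring. intros; unfold v0; ring. }
  set (G := fun t => forall z, dot n z lam = 0 -> dot n z v0 = 0 -> dot n z (tau t) = 0).
  assert (HGts : G ts).
  { intros z Hz Hzv. rewrite (dot_ext n z (tau ts) z (fun i => 1 * v0 i + gs * lam i)); auto.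
    rewrite dot_lin_r, Hz, Hzv. ring. intros; unfold v0; ring. }
  assert (Hclo : forall x y0, 0 <= x <= L -> 0 <= y0 <= L -> y0 <> x ->
     (forall y, Rmin x y0 <= y <= Rmax x y0 -> y <> x -> G y) -> G x).
  { intros x y0 Hx Hy0 Hxy Hg z Hz Hzv.
    destruct (lip_tau_dot n L tau z 0 L ltac:(lra) ltac:(lra) ltac:(lra) Hlt) as [K [HK HKl]].
    apply small_zero with K (Rabs (y0 - x)). apply Rabs_pos_lt; lra. auto.
    intros h Hh.
    set (y := x + h * ((y0 - x) / Rabs (y0 - x))).
    assert (Hsgn : Rabs ((y0 - x) / Rabs (y0 - x)) = 1).
    { unfold Rdiv. rewrite Rabs_mult, Rabs_inv, Rabs_Rabsolu. field. apply Rgt_not_eq, Rabs_pos_lt; lra. }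
    assert (Hy : Rmin x y0 <= y <= Rmax x y0 /\ y <> x).
    { unfold y. destruct (Rlt_or_le x y0).
      - rewrite (Rabs_right (y0 - x)) in * by lra. replace ((y0 - x) / (y0 - x)) with 1 by (field; lra).
        unfold Rmin, Rmax; destruct Rle_dec; split; try split; lra.
      - rewrite (Rabs_left1 (y0 - x)) in * by lra. replace ((y0 - x) / - (y0 - x)) with (-1) by (field; lra).
        unfold Rmin, Rmax; destruct Rle_dec; split; try split; lra. }
    destruct Hy as [Hy1 Hy2].
    assert (Hyz : dot n z (tau y) = 0) by (apply Hg; auto).
    assert (HyL : 0 <= y <= L) by (unfold Rmin, Rmax in Hy1; destruct Rle_dec; lra).
    specialize (HKl x y Hx HyL). rewrite Hyz, Rminus_0_r in HKl.
    replace (x - y) with (- (h * ((y0 - x) / Rabs (y0 - x)))) in HKl by (unfold y; ring).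
    rewrite Rabs_Ropp, Rabs_mult, Hsgn, (Rabs_right h) in HKl by lra. lra. }
  assert (Hloc : forall x, I x -> G x -> exists d, 0 < d /\ forall y, 0 <= y <= L -> Rabs (y - x) < d ->
       (x = ts \/ exists t0, G t0 /\ 0 <= t0 <= L /\ 0 < Rabs (t0 - x) < d) -> G y).
  { intros x Hx Hgx. assert (Hx01 := HI01 x Hx).
    destruct (Rlt_or_le (dot n lam (tau x) * dot n lam (tau x)) 1) as [Hg | Hg].
    - destruct (locAC n L tau tau' u u' beta lam k (/ C) x) as [d [Hd H]]; auto.
      exists d; split; auto. intros y Hy Hyx _ z Hz Hzv. exact (H z Hz (Hgx z Hz Hzv) y Hy Hyx).
    - assert (Hg1 : dot n lam (tau x) * dot n lam (tau x) = 1) by (pose proof (g_le1 n (tau x) lam (Htau_sphere x Hx01) Hlam); lra).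
      assert (Hux : 0 < k * vnorm n (u x)).
      { destruct (HIS x Hx) as [[_ [H1 H2]] | [_ H]]; auto. exfalso.
        assert (He := g_eq1 n (tau x) lam (Htau_sphere x Hx01) Hlam Hg1).
        assert (Hgg : dot n lam (tau x) = 1 \/ dot n lam (tau x) = -1).
        { destruct (Rle_or_lt 0 (dot n lam (tau x))); [left | right]; nra. }
        destruct Hgg as [Hgg | Hgg]; [apply H1 | apply H2]; intros i Hi; rewrite (He i Hi), Hgg; unfold vopp; ring. }
      assert (Hcx : vcont_within n 0 L tau' x) by (apply Hcont; auto).
      destruct (locB n L tau tau' u u' beta lam k x) as [d [Hd H]]; auto.
      exists d; split; auto. intros y Hy Hyx [Hxts | [t0 [Hgt0 [Ht0 Ht0x]]]] z Hz Hzv.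
      + subst x. fold gs in Hg. lra.
      + destruct (Req_dec y x). subst y. apply Hgx; auto.
        apply (H z Hz). exists t0. split; [auto | split; [auto | apply Hgt0; auto]]. auto.
        split; [apply Rabs_pos_lt; lra | auto]. }
  assert (HGall : forall t, I t -> G t).
  { intros t Ht. destruct (Rle_or_lt ts t) as [Htt | Htt].
    - apply (prop_right I G ts); auto.
      + intros x Hx Htx Hg. apply (Hclo x ts (HI01 x Hx) Hts01 ltac:(lra)).
        intros y Hy Hyx. apply Hg. unfold Rmin, Rmax in Hy; destruct Rle_dec; lra.
      + intros x Hx Htx Hg. destruct (Hloc x Hx (Hg x ltac:(lra))) as [d [Hd H]].
        exists d; split; auto. intros y Hy Hyx. apply H. apply HI01; auto. apply abs_intro_lt; lra.
        destruct (Req_dec x ts). left; auto. right.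
        exists (Rmax ts (x - d / 2)). split. apply Hg. unfold Rmax; destruct Rle_dec; lra.
        split. unfold Rmax; destruct Rle_dec; pose proof (HI01 x Hx); lra.
        rewrite Rabs_left by (unfold Rmax; destruct Rle_dec; lra). unfold Rmax; destruct Rle_dec; lra.
    - apply (prop_left I G ts); auto; try lra.
      + intros x Hx Htx Hg. apply (Hclo x ts (HI01 x Hx) Hts01 ltac:(lra)).
        intros y Hy Hyx. apply Hg. unfold Rmin, Rmax in Hy; destruct Rle_dec; lra.
      + intros x Hx Htx Hg. destruct (Hloc x Hx (Hg x ltac:(lra))) as [d [Hd H]].
        exists d; split; auto. intros y Hy Hyx. apply H. apply HI01; auto. apply abs_intro_lt; lra.
        destruct (Req_dec x ts). left; auto. right.
        exists (Rmin ts (x + d / 2)). split. apply Hg. unfold Rmin; destruct Rle_dec; lra.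
        split. unfold Rmin; destruct Rle_dec; pose proof (HI01 x Hx); lra.
        rewrite Rabs_right by (unfold Rmin; destruct Rle_dec; lra). unfold Rmin; destruct Rle_dec; lra. }
  assert (Hvpos : 0 < dot n v0 v0) by lra.
  destruct (normalize n v0 lam Hvpos Hlv) as [Hmu [Hlmu Hvmu]].
  set (mu := fun i => / sqrt (dot n v0 v0) * v0 i) in *.
  set (sq := sqrt (dot n v0 v0)) in *.
  exists mu. split; auto. split; auto. intros t Ht.
  set (a := dot n (tau t) lam). set (b := dot n (tau t) mu).
  set (z := fun i => 1 * tau t i + (- a) * lam i + (- b) * mu i).
  assert (Hzl : dot n z lam = 0).
  { rewrite dot_sym. unfold z. rewrite dot3r, Hlam, Hlmu, (dot_sym n lam (tau t)). fold a. ring. }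
  assert (Hzm : dot n z mu = 0).
  { rewrite dot_sym. unfold z. rewrite dot3r, Hmu, (dot_sym n mu lam), Hlmu, (dot_sym n mu (tau t)). fold b. ring. }
  assert (Hzv : dot n z v0 = 0).
  { rewrite (dot_ext n z v0 z (fun i => sq * mu i)); auto. rewrite dot_scal_r, Hzm; ring. }
  assert (Hzt : dot n z (tau t) = 0) by (apply HGall; auto).
  assert (Hzz : dot n z z = 0).
  { unfold z at 2. rewrite dot3r. fold z. rewrite Hzt, Hzl, Hzm. ring. }
  apply dot_eq0 in Hzz. intros i Hi. specialize (Hzz i Hi). unfold z in Hzz. simpl in Hzz. fold a b. lra.
Qed.
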